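(* Let $u$ be a smooth solution of the problem below on $[0,T)$ with smooth initial data $u_0$, under either periodic or Dirichlet boundary conditions, and let $\eta$ be the solution of $\dot\eta(t)=\bar{\mathcal K}_0(t)^{-2}$, $\eta(0)=0$. Then for all $t\in[0,T)$ and $\alpha\in[0,1]$, $$u_{xx}(\gamma(\alpha,t),t)=u_0''(\alpha)\,\gamma_\alpha(\alpha,t)=\frac{u_0''(\alpha)}{\mathcal J(\alpha,t)}\left(\int_0^1\frac{d\beta}{\mathcal J(\beta,t)}\right)^{-1},$$ and $$u_{xxx}(\gamma(\alpha,t),t)=u_0'''(\alpha)+\eta(t)\,\frac{u_0''(\alpha)^2}{\mathcal J(\alpha,t)}.$$ In particular, as long as the solution exists, the sign of $u_{xx}$ along each Lagrangian trajectory equals the sign of $u_0''(\alpha)$ (the initial concavity profile is preserved).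
   Context: The problem: $u_{xt}+u u_{xx}-u_x^2=-2\int_0^1 u_x^2\,dx$ for $t>0$, $x\in[0,1]$, $u(x,0)=u_0(x)$, with either periodic boundary conditions $u(0,t)=u(1,t)$, $u_x(0,t)=u_x(1,t)$ or Dirichlet boundary conditions $u(0,t)=u(1,t)=0$. The Lagrangian flow $\gamma(\alpha,t)$ is defined by $\dot\gamma(\alpha,t)=u(\gamma(\alpha,t),t)$, $\gamma(\alpha,0)=\alpha$, and $\gamma_\alpha=\partial\gamma/\partial\alpha$. Given $\eta(t)$, define $\mathcal J(\alpha,t)=1-\eta(t)u_0'(\alpha)$ and $\bar{\mathcal K}_0(t)=\int_0^1\mathcal J(\alpha,t)^{-1}\,d\alpha$. *)

(* Defs.v *)
From Stdlib Require Import Reals Lra.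
Open Scope R_scope.

Definition deriv_within (S : R -> Prop) (f : R -> R) (x l : R) : Prop :=
  forall eps, 0 < eps -> exists delta, 0 < delta /\
    forall h, h <> 0 -> Rabs h < delta -> S (x + h) ->
      Rabs ((f (x + h) - f x) / h - l) < eps.

Definition Rint (f : R -> R) (a b I : R) : Prop :=
  exists pr : Riemann_integrable f a b, RiemannInt pr = I.

Definition cont2_lt (T : R) (f : R -> R -> R) (x t : R) : Prop :=
  forall eps, 0 < eps -> exists delta, 0 < delta /\
    forall x' t', t' < T -> Rabs (x' - x) < delta -> Rabs (t' - t) < delta ->
      Rabs (f x' t' - f x t) < eps.

(* u is C^infinity on the open set R x (-oo, T), with D i j = d_x^i d_t^j u. *)
Definition smooth_derivs (T : R) (u : R -> R -> R)
    (D : nat -> nat -> R -> R -> R) : Prop :=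
  (forall x t, D O O x t = u x t) /\
  (forall i j x t, t < T ->
     derivable_pt_lim (fun y => D i j y t) x (D (S i) j x t)) /\
  (forall i j x t, t < T ->
     derivable_pt_lim (fun s => D i j x s) t (D i (S j) x t)) /\
  (forall i j x t, t < T -> cont2_lt T (D i j) x t).

Inductive BC := Periodic | Dirichlet.

Definition bc_holds (bc : BC) (T : R) (u : R -> R -> R) : Prop :=
  match bc with
  | Periodic => forall x t, t < T -> u (x + 1) t = u x t
  | Dirichlet => forall t, 0 <= t < T -> u 0 t = 0 /\ u 1 t = 0
  end.

(* Main.v *)
Require Import Defs.
From Stdlib Require Import ZArith Reals Lra Psatz Classical.
From Coquelicot Require Import Coquelicot Derive_2d.
Open Scope R_scope.

Lemma mk_cont (f : R -> R) x :
  (forall eps, 0 < eps -> exists delta, 0 < delta /\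
     forall y, Rabs (y - x) < delta -> Rabs (f y - f x) < eps) ->
  continuity_pt f x.
Proof.
  intros H eps Heps. destruct (H eps Heps) as [d [Hd H']].
  exists d; split; auto. intros y [_ Hy]. apply H'. exact Hy.
Qed.

Lemma cont_elim (f : R -> R) x : continuity_pt f x ->
  forall eps, 0 < eps -> exists delta, 0 < delta /\
     forall y, Rabs (y - x) < delta -> Rabs (f y - f x) < eps.
Proof.
  intros H eps He. destruct (H eps He) as [d [Hd H']].
  exists d; split; auto. intros y Hy.
  destruct (Req_dec y x) as [->|Hne].
  - unfold Rminus; rewrite Rplus_opp_r, Rabs_R0; auto.
  - apply H'. split; [split; [exact I| auto] | exact Hy].
Qed.

Lemma mk_der (f : R -> R) x l :
  (forall eps, 0 < eps -> exists delta, 0 < delta /\ forall h, h <> 0 ->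
     Rabs h < delta -> Rabs ((f (x + h) - f x) / h - l) < eps) ->
  derivable_pt_lim f x l.
Proof.
  intros H eps He. destruct (H eps He) as [d [Hd H']].
  exists (mkposreal d Hd). exact H'.
Qed.

Lemma der_cont f x l : derivable_pt_lim f x l -> continuity_pt f x.
Proof.
  intros H. apply derivable_continuous_pt. exists l. exact H.
Qed.

Lemma dmul f g x l1 l2 : derivable_pt_lim f x l1 -> derivable_pt_lim g x l2 ->
  derivable_pt_lim (fun y => f y * g y) x (l1 * g x + f x * l2).
Proof. intros; apply (derivable_pt_lim_mult f g); auto. Qed.
Lemma dplus f g x l1 l2 : derivable_pt_lim f x l1 -> derivable_pt_lim g x l2 ->
  derivable_pt_lim (fun y => f y + g y) x (l1 + l2).
Proof. intros; apply (derivable_pt_lim_plus f g); auto. Qed.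
Lemma dminus f g x l1 l2 : derivable_pt_lim f x l1 -> derivable_pt_lim g x l2 ->
  derivable_pt_lim (fun y => f y - g y) x (l1 - l2).
Proof. intros; apply (derivable_pt_lim_minus f g); auto. Qed.
Lemma dconst c x : derivable_pt_lim (fun _ => c) x 0.
Proof. apply derivable_pt_lim_const. Qed.
Lemma did x : derivable_pt_lim (fun y => y) x 1.
Proof. apply derivable_pt_lim_id. Qed.
Lemma dcomp f g x l1 l2 : derivable_pt_lim f x l1 -> derivable_pt_lim g (f x) l2 ->
  derivable_pt_lim (fun y => g (f y)) x (l2 * l1).
Proof. intros; apply (derivable_pt_lim_comp f g); auto. Qed.
Lemma dexp f x l : derivable_pt_lim f x l ->
  derivable_pt_lim (fun y => exp (f y)) x (exp (f x) * l).
Proof. intros; apply dcomp; auto. apply derivable_pt_lim_exp. Qed.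
Lemma ddiv f g x l1 l2 : derivable_pt_lim f x l1 -> derivable_pt_lim g x l2 -> g x <> 0 ->
  derivable_pt_lim (fun y => f y / g y) x ((l1 * g x - l2 * f x) / (g x)²).
Proof. intros; apply (derivable_pt_lim_div f g); auto. Qed.
Lemma dext f g x l : (forall y, f y = g y) -> derivable_pt_lim f x l -> derivable_pt_lim g x l.
Proof.
  intros E H eps He. destruct (H eps He) as [d H']. exists d. intros h H1 H2.
  rewrite <- !E. auto.
Qed.
Lemma dext_loc f g x l r : 0 < r -> (forall y, Rabs (y - x) < r -> f y = g y) ->
  derivable_pt_lim f x l -> derivable_pt_lim g x l.
Proof.
  intros Hr E H eps He. destruct (H eps He) as [d H'].
  assert (Hm : 0 < Rmin d r) by (apply Rmin_pos; [apply cond_pos|auto]).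
  exists (mkposreal _ Hm). simpl. intros h H1 H2.
  rewrite <- !E.
  - apply H'; auto. apply Rlt_le_trans with (1 := H2); apply Rmin_l.
  - unfold Rminus; rewrite Rplus_opp_r, Rabs_R0; auto.
  - replace (x + h - x) with h by ring. apply Rlt_le_trans with (1 := H2); apply Rmin_r.
Qed.

Lemma cmul f g x : continuity_pt f x -> continuity_pt g x -> continuity_pt (fun y => f y * g y) x.
Proof. intros; apply (continuity_pt_mult f g); auto. Qed.
Lemma cplus f g x : continuity_pt f x -> continuity_pt g x -> continuity_pt (fun y => f y + g y) x.
Proof. intros; apply (continuity_pt_plus f g); auto. Qed.
Lemma cminus f g x : continuity_pt f x -> continuity_pt g x -> continuity_pt (fun y => f y - g y) x.
Proof. intros; apply (continuity_pt_minus f g); auto. Qed.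
Lemma cconst c x : continuity_pt (fun _ => c) x.
Proof. apply continuity_pt_const. intros a b; auto. Qed.
Lemma ccomp f g x : continuity_pt f x -> continuity_pt g (f x) -> continuity_pt (fun y => g (f y)) x.
Proof. intros; apply (continuity_pt_comp f g); auto. Qed.
Lemma cexp f x : continuity_pt f x -> continuity_pt (fun y => exp (f y)) x.
Proof. intros; apply ccomp; auto. apply derivable_continuous_pt, derivable_pt_exp. Qed.
Lemma cinv f x : continuity_pt f x -> f x <> 0 -> continuity_pt (fun y => / f y) x.
Proof. intros; apply (continuity_pt_inv f); auto. Qed.
Lemma cext f g x : (forall y, f y = g y) -> continuity_pt f x -> continuity_pt g x.
Proof.
  intros E H. apply mk_cont. intros eps He. destruct (cont_elim f x H eps He) as [d [Hd H']].
  exists d; split; auto. intros; rewrite <- !E; auto.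
Qed.

Lemma mvt f df a b : a < b -> (forall x, a < x < b -> derivable_pt_lim f x (df x)) ->
  (forall x, a <= x <= b -> continuity_pt f x) ->
  exists c, a < c < b /\ f b - f a = df c * (b - a).
Proof.
  intros Hab Hd Hc.
  pose (pr1 := fun c (P : a < c < b) =>
      exist (fun l => derivable_pt_abs f c l) (df c) (Hd c P) : derivable_pt f c).
  pose (pr2 := fun c (P : a < c < b) => derivable_pt_id c).
  destruct (MVT f id a b pr1 pr2 Hab Hc
     (fun c _ => derivable_continuous_pt _ _ (derivable_pt_id c))) as [c [P HP]].
  exists c; split; auto. unfold pr1, pr2 in HP. rewrite derive_pt_id in HP.
  simpl in HP. unfold id in HP. nra.
Qed.

Lemma nonincr f df a b : a <= b -> (forall x, a < x < b -> derivable_pt_lim f x (df x)) ->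
  (forall x, a < x < b -> df x <= 0) ->
  (forall x, a <= x <= b -> continuity_pt f x) -> f b <= f a.
Proof.
  intros Hab Hd Hn Hc. destruct (Req_dec a b) as [<-|Hne]; [lra|].
  destruct (mvt f df a b) as [c [Hc1 Hc2]]; auto; [lra|].
  specialize (Hn c Hc1). nra.
Qed.

Lemma const_der f df a b : a <= b -> (forall x, a < x < b -> derivable_pt_lim f x (df x)) ->
  (forall x, a < x < b -> df x = 0) ->
  (forall x, a <= x <= b -> continuity_pt f x) -> f b = f a.
Proof.
  intros Hab Hd Hn Hc. apply Rle_antisym.
  - apply (nonincr f df a b); auto. intros x Hx; rewrite Hn; auto; lra.
  - assert (- f b <= - f a); [|lra].
    apply (nonincr (fun y => - f y) (fun y => - df y) a b); auto.
    + intros x Hx. apply (derivable_pt_lim_opp f). auto.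
    + intros x Hx; rewrite Hn; auto; lra.
    + intros x Hx. apply (continuity_pt_opp f). auto.
Qed.

Lemma gron_up f df a b A L : a <= b -> 0 < L ->
  (forall x, a <= x <= b -> continuity_pt f x) ->
  (forall x, a < x < b -> derivable_pt_lim f x (df x)) ->
  (forall x, a < x < b -> df x <= A + L * f x) ->
  f b + A / L <= (f a + A / L) * exp (L * (b - a)).
Proof.
  intros Hab HL Hc Hd Hb.
  set (g := fun x => (f x + A / L) * exp (- (L * (x - a)))).
  assert (Hg : g b <= g a).
  { apply (nonincr g (fun x => df x * exp (- (L * (x - a))) +
        (f x + A / L) * (exp (- (L * (x - a))) * (- (L * 1))))); auto.
    - intros x Hx. unfold g.
      apply (dmul (fun y => f y + A / L) (fun y => exp (- (L * (y - a))))).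
      + replace (df x) with (df x + 0) by ring. apply (dplus f (fun _ => A / L)); auto. apply dconst.
      + apply (dexp (fun y => - (L * (y - a)))). apply (derivable_pt_lim_opp (fun y => L * (y - a))).
        apply (derivable_pt_lim_scal (fun y => y - a)).
        replace 1 with (1 - 0) by ring. apply (dminus (fun y => y) (fun _ => a)); [apply did|apply dconst].
    - intros x Hx. specialize (Hb x Hx). pose proof (exp_pos (- (L * (x - a)))).
      assert (df x - L * (f x + A / L) <= 0).
      { replace (L * (f x + A / L)) with (L * f x + A) by (field; lra). lra. }
      nra.
    - intros x Hx. unfold g. apply (cmul (fun y => f y + A / L) (fun y => exp (- (L * (y - a))))).
      + apply (cplus f (fun _ => A / L)); auto. apply cconst.
      + apply (cexp (fun y => - (L * (y - a)))). apply (continuity_pt_opp (fun y => L * (y - a))).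
        apply (continuity_pt_scal (fun y => y - a)). apply (cminus (fun y => y) (fun _ => a)).
        apply derivable_continuous_pt, derivable_pt_id. apply cconst. }
  unfold g in Hg. replace (a - a) with 0 in Hg by ring.
  rewrite Rmult_0_r, Ropp_0, exp_0, Rmult_1_r in Hg.
  pose proof (exp_pos (L * (b - a))).
  assert (E : exp (- (L * (b - a))) * exp (L * (b - a)) = 1).
  { rewrite <- exp_plus. replace (- (L * (b - a)) + L * (b - a)) with 0 by ring. apply exp_0. }
  apply Rmult_le_compat_r with (r := exp (L * (b - a))) in Hg; [|lra].
  rewrite Rmult_assoc, E, Rmult_1_r in Hg. exact Hg.
Qed.

Lemma gron_low f df a b L : a <= b -> 0 < L ->
  (forall x, a <= x <= b -> continuity_pt f x) ->
  (forall x, a < x < b -> derivable_pt_lim f x (df x)) ->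
  (forall x, a < x < b -> - (L * f x) <= df x) ->
  f a * exp (- (L * (b - a))) <= f b.
Proof.
  intros Hab HL Hc Hd Hb.
  set (g := fun x => - (f x * exp (L * (x - a)))).
  assert (Hg : g b <= g a).
  { apply (nonincr g (fun x => - (df x * exp (L * (x - a)) +
        f x * (exp (L * (x - a)) * (L * 1))))); auto.
    - intros x Hx. unfold g. apply (derivable_pt_lim_opp (fun y => f y * exp (L * (y - a)))).
      apply (dmul f (fun y => exp (L * (y - a)))); auto.
      apply (dexp (fun y => L * (y - a))). apply (derivable_pt_lim_scal (fun y => y - a)).
      replace 1 with (1 - 0) by ring. apply (dminus (fun y => y) (fun _ => a)); [apply did|apply dconst].
    - intros x Hx. specialize (Hb x Hx). pose proof (exp_pos (L * (x - a))). nra.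
    - intros x Hx. unfold g. apply (continuity_pt_opp (fun y => f y * exp (L * (y - a)))).
      apply cmul; auto.
      apply (cexp (fun y => L * (y - a))). apply (continuity_pt_scal (fun y => y - a)). apply (cminus (fun y => y) (fun _ => a)).
      apply derivable_continuous_pt, derivable_pt_id. apply cconst. }
  unfold g in Hg. replace (a - a) with 0 in Hg by ring.
  rewrite Rmult_0_r, exp_0, Rmult_1_r in Hg.
  pose proof (exp_pos (- (L * (b - a)))).
  assert (E : exp (L * (b - a)) * exp (- (L * (b - a))) = 1).
  { rewrite <- exp_plus. replace (L * (b - a) + - (L * (b - a))) with 0 by ring. apply exp_0. }
  assert (f a <= f b * exp (L * (b - a))) by lra.
  apply Rmult_le_compat_r with (r := exp (- (L * (b - a)))) in H0; [|lra].
  rewrite Rmult_assoc, E, Rmult_1_r in H0. exact H0.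
Qed.

Lemma real_ind (a b : R) (P : R -> Prop) : a <= b ->
  (forall c, a <= c <= b -> (forall s, a <= s < c -> P s) ->
     exists r, 0 < r /\ forall s, c <= s < c + r -> s <= b -> P s) ->
  forall s, a <= s <= b -> P s.
Proof.
  intros Hab Hstep.
  set (E := fun c => a <= c <= b /\ forall s, a <= s <= c -> P s).
  destruct (Hstep a (conj (Rle_refl a) Hab)) as [r0 [Hr0 H0]]. { intros s Hs; lra. }
  assert (Ea : E a). { split; [lra|]. intros s Hs. apply H0; lra. }
  assert (Hb : bound E). { exists b. intros x [Hx _]. lra. }
  destruct (completeness E Hb (ex_intro _ a Ea)) as [m [Hub Hlub]].
  assert (Ham : a <= m) by (apply Hub; auto).
  assert (Hmb : m <= b) by (apply Hlub; intros x [Hx _]; lra).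
  assert (Hbelow : forall s, a <= s < m -> P s).
  { intros s Hs. apply NNPP; intro HN.
    assert (m <= s); [|lra]. apply Hlub. intros x [Hx Hx2].
    destruct (Rle_dec x s); auto. exfalso; apply HN; apply Hx2; lra. }
  destruct (Hstep m (conj Ham Hmb) Hbelow) as [r [Hr Hm]].
  assert (Hmin1 : Rmin b (m + r/2) <= m + r/2) by apply Rmin_r.
  assert (Hmin2 : Rmin b (m + r/2) <= b) by apply Rmin_l.
  assert (Hupto : forall s, a <= s <= Rmin b (m + r/2) -> P s).
  { intros s Hs. destruct (Rlt_dec s m).
    - apply Hbelow; lra.
    - apply Hm; lra. }
  assert (HE : E (Rmin b (m + r/2))).
  { split; [split|]; auto. apply Rmin_glb; lra. }
  assert (HH : Rmin b (m + r/2) <= m) by (apply Hub; auto).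
  intros s Hs. apply Hupto. split; [lra|].
  destruct (Rle_dec b (m + r/2)).
  - rewrite Rmin_left by lra. lra.
  - rewrite Rmin_right in HH by lra. lra.
Qed.

Lemma compact_mono (a b : R) (Q : R -> R -> Prop) : a <= b ->
  (forall y m m', Q y m -> m <= m' -> Q y m') ->
  (forall x, a <= x <= b -> exists m r, 0 < r /\
      forall y, a <= y <= b -> Rabs (y - x) < r -> Q y m) ->
  exists m, forall y, a <= y <= b -> Q y m.
Proof.
  intros Hab Hmono Hloc.
  assert (H : forall c, a <= c <= b -> exists m, forall y, a <= y <= c -> Q y m).
  { apply (real_ind a b); auto.
    intros c Hc IH. destruct (Hloc c Hc) as [mc [r [Hr Hq]]].
    exists r; split; auto. intros s Hs Hsb.
    destruct (Req_dec c a) as [Eca|Nca].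
    - exists mc. intros y Hy. apply Hq; [lra|]. apply Rabs_def1; lra.
    - set (s0 := Rmax a (c - r/2)).
      assert (Hs0 : a <= s0 < c).
      { unfold s0; split; [apply Rmax_l|]. apply Rmax_lub_lt; lra. }
      destruct (IH s0 Hs0) as [m0 Hm0].
      exists (Rmax m0 mc). intros y Hy.
      destruct (Rle_dec y s0).
      + apply Hmono with m0; [apply Hm0; lra | apply Rmax_l].
      + apply Hmono with mc; [|apply Rmax_r]. apply Hq; [lra|].
        assert (c - r/2 <= s0) by apply Rmax_r. apply Rabs_def1; lra. }
  destruct (H b (conj Hab (Rle_refl b))) as [m Hm]. exists m; auto.
Qed.

Lemma Rabs_def2b a b : Rabs a <= b -> - b <= a <= b.
Proof. unfold Rabs; destruct Rcase_abs; intros; lra. Qed.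

Definition clamp (lo hi x : R) := Rmax lo (Rmin hi x).

Lemma clamp_in lo hi x : lo <= hi -> lo <= clamp lo hi x <= hi.
Proof. intros; unfold clamp, Rmax, Rmin; repeat destruct Rle_dec; lra. Qed.
Lemma clamp_id lo hi x : lo <= x <= hi -> clamp lo hi x = x.
Proof. intros; unfold clamp, Rmax, Rmin; repeat destruct Rle_dec; lra. Qed.
Lemma clamp_lip lo hi x y : lo <= hi ->
  Rabs (clamp lo hi x - clamp lo hi y) <= Rabs (x - y).
Proof.
  intros; unfold clamp, Rmax, Rmin; repeat destruct Rle_dec;
  unfold Rabs; repeat destruct Rcase_abs; lra.
Qed.

Lemma dw_cw (S : R -> Prop) f x l : deriv_within S f x l ->
  forall eps, 0 < eps -> exists delta, 0 < delta /\
    forall y, S y -> Rabs (y - x) < delta -> Rabs (f y - f x) < eps.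
Proof.
  intros H eps He. destruct (H 1 Rlt_0_1) as [d [Hd H1]].
  assert (Hl : 0 < Rabs l + 1) by (pose proof (Rabs_pos l); lra).
  exists (Rmin d (eps / (Rabs l + 1))). split.
  { apply Rmin_pos; auto. apply Rdiv_lt_0_compat; auto. }
  intros y Sy Hy.
  destruct (Req_dec y x) as [->|Hne].
  { unfold Rminus; rewrite Rplus_opp_r, Rabs_R0; auto. }
  assert (Hh : y - x <> 0) by lra.
  assert (Hyd : Rabs (y - x) < d) by (apply Rlt_le_trans with (1 := Hy); apply Rmin_l).
  assert (Hye : Rabs (y - x) < eps / (Rabs l + 1))
    by (apply Rlt_le_trans with (1 := Hy); apply Rmin_r).
  specialize (H1 (y - x) Hh Hyd). replace (x + (y - x)) with y in H1 by ring.
  specialize (H1 Sy).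
  set (q := (f y - f x) / (y - x)) in *.
  assert (Hq : Rabs q <= Rabs l + 1).
  { replace q with ((q - l) + l) by ring.
    eapply Rle_trans; [apply Rabs_triang|]. lra. }
  replace (f y - f x) with (q * (y - x)) by (unfold q; field; auto).
  rewrite Rabs_mult.
  apply Rle_lt_trans with ((Rabs l + 1) * Rabs (y - x)).
  { apply Rmult_le_compat_r; auto. apply Rabs_pos. }
  apply Rmult_lt_reg_l with (/ (Rabs l + 1)). { apply Rinv_0_lt_compat; auto. }
  rewrite <- Rmult_assoc, Rinv_l by lra. rewrite Rmult_1_l.
  unfold Rdiv in Hye. lra.
Qed.

Lemma dw_interior (S : R -> Prop) f x l lo hi :
  (forall z, lo <= z <= hi -> S z) -> lo < x < hi ->
  deriv_within S f x l -> derivable_pt_lim f x l.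
Proof.
  intros HS Hx H. apply mk_der. intros eps He.
  destruct (H eps He) as [d [Hd H1]].
  exists (Rmin d (Rmin (x - lo) (hi - x))). split.
  { apply Rmin_pos; auto. apply Rmin_pos; lra. }
  intros h Hh Hhd. apply H1; auto.
  - apply Rlt_le_trans with (1 := Hhd); apply Rmin_l.
  - apply HS.
    assert (Rabs h < Rmin (x - lo) (hi - x)) by (apply Rlt_le_trans with (1 := Hhd); apply Rmin_r).
    assert (Rmin (x - lo) (hi - x) <= x - lo) by apply Rmin_l.
    assert (Rmin (x - lo) (hi - x) <= hi - x) by apply Rmin_r.
    assert (- Rabs h <= h <= Rabs h) by (unfold Rabs; destruct Rcase_abs; lra).
    lra.
Qed.

Lemma cw_clamp (f : R -> R) lo hi : lo <= hi ->
  (forall x, lo <= x <= hi -> forall eps, 0 < eps -> exists delta, 0 < delta /\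
     forall y, lo <= y <= hi -> Rabs (y - x) < delta -> Rabs (f y - f x) < eps) ->
  forall z, continuity_pt (fun s => f (clamp lo hi s)) z.
Proof.
  intros Hlh H z. apply mk_cont. intros eps He.
  destruct (H (clamp lo hi z) (clamp_in lo hi z Hlh) eps He) as [d [Hd H1]].
  exists d; split; auto. intros y Hy. apply H1. apply clamp_in; auto.
  eapply Rle_lt_trans; [apply clamp_lip; auto|]. auto.
Qed.

Lemma clamp_der (f : R -> R) lo hi x l : lo < x < hi -> derivable_pt_lim f x l ->
  derivable_pt_lim (fun s => f (clamp lo hi s)) x l.
Proof.
  intros Hx H. apply (dext_loc f _ x l (Rmin (x - lo) (hi - x))).
  { apply Rmin_pos; lra. }
  - intros y Hy. rewrite clamp_id; auto.
    assert (Rmin (x - lo) (hi - x) <= x - lo) by apply Rmin_l.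
    assert (Rmin (x - lo) (hi - x) <= hi - x) by apply Rmin_r.
    apply Rabs_def2 in Hy. lra.
  - auto.
Qed.

Lemma mvt2 f df x u : (forall z, derivable_pt_lim f z (df z)) ->
  exists c, Rabs (c - x) <= Rabs (u - x) /\ f u - f x = df c * (u - x).
Proof.
  intros Hd. destruct (Rtotal_order x u) as [Hlt|[Heq|Hgt]].
  - destruct (mvt f df x u Hlt) as [c [Hc1 Hc2]]; auto.
    + intros z Hz; apply der_cont with (df z); auto.
    + exists c; split; auto. rewrite !Rabs_right; lra.
  - subst. exists u. split; [lra|]. ring.
  - destruct (mvt f df u x Hgt) as [c [Hc1 Hc2]]; auto.
    + intros z Hz; apply der_cont with (df z); auto.
    + exists c; split; [|lra]. rewrite !Rabs_left1; lra.
Qed.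

Lemma diff2 (F Fx Ft : R -> R -> R) T x y :
  y < T ->
  (forall u v, v < T -> derivable_pt_lim (fun z => F z v) u (Fx u v)) ->
  cont2_lt T Fx x y ->
  derivable_pt_lim (fun z => F x z) y (Ft x y) ->
  differentiable_pt_lim F x y (Fx x y) (Ft x y).
Proof.
  intros HyT Hx Hc Ht eps.
  assert (He2 : 0 < eps / 2) by (destruct eps; simpl; lra).
  destruct (Hc (eps / 2) He2) as [d1 [Hd1 H1]].
  destruct (Ht (eps / 2) He2) as [d2 H2].
  assert (Hd : 0 < Rmin (Rmin d1 d2) (T - y)).
  { apply Rmin_pos; [apply Rmin_pos; auto; apply cond_pos| lra]. }
  exists (mkposreal _ Hd). simpl. intros u v Hu Hv.
  assert (Hm1 : Rmin (Rmin d1 d2) (T - y) <= Rmin d1 d2) by apply Rmin_l.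
  assert (Hm2 : Rmin (Rmin d1 d2) (T - y) <= T - y) by apply Rmin_r.
  assert (Hm3 : Rmin d1 d2 <= d1) by apply Rmin_l.
  assert (Hm4 : Rmin d1 d2 <= d2) by apply Rmin_r.
  assert (HvT : v < T) by (apply Rabs_def2 in Hv; lra).
  destruct (mvt2 (fun z => F z v) (fun z => Fx z v) x u) as [c [Hc1 Hc2]].
  { intros; apply Hx; auto. }
  assert (T1 : Rabs (F u v - F x v - Fx x y * (u - x)) <= eps / 2 * Rabs (u - x)).
  { rewrite Hc2. replace (Fx c v * (u - x) - Fx x y * (u - x)) with
      ((Fx c v - Fx x y) * (u - x)) by ring.
    rewrite Rabs_mult. apply Rmult_le_compat_r; [apply Rabs_pos|].
    left. apply H1; auto; lra. }
  assert (T2 : Rabs (F x v - F x y - Ft x y * (v - y)) <= eps / 2 * Rabs (v - y)).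
  { destruct (Req_dec v y) as [->|Hne].
    - unfold Rminus; rewrite !Rplus_opp_r, Rmult_0_r, Rplus_opp_r, Rabs_R0. lra.
    - specialize (H2 (v - y) ltac:(lra) ltac:(lra)).
      replace (y + (v - y)) with v in H2 by ring.
      replace (F x v - F x y - Ft x y * (v - y)) with
        (((F x v - F x y) / (v - y) - Ft x y) * (v - y)) by (field; lra).
      rewrite Rabs_mult. apply Rmult_le_compat_r; [apply Rabs_pos|]. lra. }
  replace (F u v - F x y - (Fx x y * (u - x) + Ft x y * (v - y))) with
    ((F u v - F x v - Fx x y * (u - x)) + (F x v - F x y - Ft x y * (v - y))) by ring.
  eapply Rle_trans; [apply Rabs_triang|].
  assert (Rabs (u - x) <= Rmax (Rabs (u - x)) (Rabs (v - y))) by apply Rmax_l.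
  assert (Rabs (v - y) <= Rmax (Rabs (u - x)) (Rabs (v - y))) by apply Rmax_r.
  destruct eps as [e He]; simpl in *. nra.
Qed.

Lemma chain2 (F Fx Ft : R -> R -> R) T (X : R -> R) dX s :
  s < T ->
  (forall u v, v < T -> derivable_pt_lim (fun z => F z v) u (Fx u v)) ->
  cont2_lt T Fx (X s) s ->
  derivable_pt_lim (fun z => F (X s) z) s (Ft (X s) s) ->
  derivable_pt_lim X s dX ->
  derivable_pt_lim (fun z => F (X z) z) s (Fx (X s) s * dX + Ft (X s) s).
Proof.
  intros HsT Hx Hc Ht HX.
  replace (Fx (X s) s * dX + Ft (X s) s) with (Fx (X s) s * dX + Ft (X s) s * 1) by ring.
  apply (derivable_pt_lim_comp_2d F X (fun z => z)); auto.
  - apply (diff2 F Fx Ft T); auto.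
  - apply derivable_pt_lim_id.
Qed.

Lemma c2_comp (F : R -> R -> R) T X Y s : Y s < T -> cont2_lt T F (X s) (Y s) ->
  continuity_pt X s -> continuity_pt Y s ->
  continuity_pt (fun z => F (X z) (Y z)) s.
Proof.
  intros HT Hc HX HY. apply mk_cont. intros eps He.
  destruct (Hc eps He) as [d [Hd H]].
  destruct (cont_elim X s HX d Hd) as [d1 [Hd1 H1]].
  destruct (cont_elim Y s HY (Rmin d (T - Y s)) ltac:(apply Rmin_pos; lra)) as [d2 [Hd2 H2]].
  exists (Rmin d1 d2). split; [apply Rmin_pos; auto|]. intros z Hz.
  assert (Hz1 : Rabs (z - s) < d1) by (apply Rlt_le_trans with (1 := Hz); apply Rmin_l).
  assert (Hz2 : Rabs (z - s) < d2) by (apply Rlt_le_trans with (1 := Hz); apply Rmin_r).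
  specialize (H1 z Hz1). specialize (H2 z Hz2).
  assert (Rmin d (T - Y s) <= d) by apply Rmin_l.
  assert (Rmin d (T - Y s) <= T - Y s) by apply Rmin_r.
  apply H; try lra. apply Rabs_def2 in H2. lra.
Qed.

Lemma rect_bound (F : R -> R -> R) T A B t0 : A <= B -> 0 <= t0 < T ->
  (forall y s, s < T -> cont2_lt T F y s) ->
  exists M, 0 < M /\ forall y s, A <= y <= B -> 0 <= s <= t0 -> Rabs (F y s) <= M.
Proof.
  intros HAB Ht0 Hc.
  assert (Hloc : forall x, 0 <= x <= t0 -> exists m r, 0 < r /\
     forall s, 0 <= s <= t0 -> Rabs (s - x) < r ->
       (fun s m => forall y, A <= y <= B -> Rabs (F y s) <= m) s m).
  { intros x Hx.
    destruct (compact_mono A B (fun y m => 0 < m /\ forall s, Rabs (s - x) < / m ->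
                 Rabs (F y s) <= m)) as [m Hm]; auto.
    - intros y m m' [Hm0 Hm] Hmm. split; [lra|]. intros s Hs. apply Rle_trans with m; auto.
      apply Hm. apply Rlt_le_trans with (1 := Hs). apply Rinv_le_contravar; lra.
    - intros y0 Hy0. assert (HxT : x < T) by lra.
      destruct (Hc y0 x HxT 1 Rlt_0_1) as [d [Hd H]].
      set (m := Rmax (Rabs (F y0 x) + 1) (Rmax (/ d) (/ (T - x)))).
      assert (Hm1 : Rabs (F y0 x) + 1 <= m) by apply Rmax_l.
      assert (Hm2 : / d <= m) by (eapply Rle_trans; [apply Rmax_l|apply Rmax_r]).
      assert (Hm3 : / (T - x) <= m) by (eapply Rle_trans; [apply Rmax_r|apply Rmax_r]).
      assert (Hd' : 0 < / d) by (apply Rinv_0_lt_compat; auto).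
      assert (HT' : 0 < / (T - x)) by (apply Rinv_0_lt_compat; lra).
      exists m, d. split; auto. intros y Hy Hyd. split; [lra|].
      intros s Hs.
      assert (Hs1 : / m <= d).
      { rewrite <- (Rinv_inv d). apply Rinv_le_contravar; lra. }
      assert (Hs2 : / m <= T - x).
      { rewrite <- (Rinv_inv (T - x)). apply Rinv_le_contravar; lra. }
      apply Rabs_def2 in Hs as Hs'.
      assert (Hlt : Rabs (F y s - F y0 x) < 1) by (apply H; try lra; apply Rabs_def1; lra).
      assert (Rabs (F y s) <= Rabs (F y s - F y0 x) + Rabs (F y0 x)).
      { replace (F y s) with ((F y s - F y0 x) + F y0 x) at 1 by ring. apply Rabs_triang. }
      lra.
    - exists m, (/ m). destruct (Hm A (conj (Rle_refl A) HAB)) as [Hm0 _].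
      split; [apply Rinv_0_lt_compat; auto|].
      intros s Hs Hsx y Hy. apply Hm; auto. }
  destruct (compact_mono 0 t0 (fun s m => forall y, A <= y <= B -> Rabs (F y s) <= m)) as [m Hm];
    [lra| |exact Hloc|].
  - intros s m m' H Hmm y Hy. apply Rle_trans with m; auto.
  - exists (Rmax m 1). split; [apply Rlt_le_trans with 1; [lra|apply Rmax_r]|].
    intros y s Hy Hs. apply Rle_trans with m; [apply Hm; auto|apply Rmax_l].
Qed.

Lemma ucurve (F : R -> R -> R) T t0 (g : R -> R) : 0 <= t0 < T ->
  (forall y s, s < T -> cont2_lt T F y s) -> (forall s, continuity_pt g s) ->
  forall eps, 0 < eps -> exists delta, 0 < delta /\ forall s y, 0 <= s <= t0 ->
    Rabs (y - g s) < delta -> Rabs (F y s - F (g s) s) < eps.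
Proof.
  intros Ht0 Hc Hg eps He.
  destruct (compact_mono 0 t0 (fun s m => 0 < m /\ forall y, Rabs (y - g s) < / m ->
       Rabs (F y s - F (g s) s) < eps)) as [m Hm]; [lra| | |].
  - intros s m m' [Hm0 Hm] Hmm. split; [lra|]. intros y Hy. apply Hm.
    apply Rlt_le_trans with (1 := Hy). apply Rinv_le_contravar; lra.
  - intros x Hx. assert (HxT : x < T) by lra.
    destruct (Hc (g x) x HxT (eps / 2) ltac:(lra)) as [d [Hd H]].
    destruct (cont_elim g x (Hg x) (d / 2) ltac:(lra)) as [dg [Hdg Hg1]].
    exists (2 / d), (Rmin dg d). split; [apply Rmin_pos; auto|].
    intros s Hs Hsx. split; [apply Rdiv_lt_0_compat; lra|].
    assert (Hsx1 : Rabs (s - x) < dg) by (apply Rlt_le_trans with (1 := Hsx); apply Rmin_l).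
    assert (Hsx2 : Rabs (s - x) < d) by (apply Rlt_le_trans with (1 := Hsx); apply Rmin_r).
    specialize (Hg1 s Hsx1).
    intros y Hy. replace (/ (2 / d)) with (d / 2) in Hy by (field; lra).
    assert (A1 : Rabs (F y s - F (g x) x) < eps / 2).
    { apply H; try lra; apply Rabs_def2 in Hy; apply Rabs_def2 in Hg1;
      apply Rabs_def1; lra. }
    assert (A2 : Rabs (F (g s) s - F (g x) x) < eps / 2).
    { apply H; try lra; apply Rabs_def2 in Hg1; apply Rabs_def1; lra. }
    replace (F y s - F (g s) s) with ((F y s - F (g x) x) - (F (g s) s - F (g x) x)) by ring.
    eapply Rle_lt_trans; [apply Rabs_triang|]. rewrite Rabs_Ropp. lra.
  - destruct (Hm 0 ltac:(lra)) as [Hm0 _]. exists (/ m). split; [apply Rinv_0_lt_compat; auto|].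
    intros s y Hs Hy. apply Hm; auto.
Qed.

Lemma rint_ex (f : R -> R) a b : (forall y, continuity_pt f y) -> ex_RInt f a b.
Proof.
  intros H. apply (@ex_RInt_continuous R_CompleteNormedModule). intros z _. apply continuity_pt_filterlim. auto.
Qed.

Lemma rint_der (f : R -> R) x : (forall y, continuity_pt f y) ->
  derivable_pt_lim (fun b => RInt f 0 b) x (f x).
Proof.
  intros H. apply is_derive_Reals.
  apply (@is_derive_RInt R_CompleteNormedModule f (fun b => RInt f 0 b) 0 x).
  - apply filter_forall. intros b. apply (@RInt_correct R_CompleteNormedModule). apply rint_ex; auto.
  - apply continuity_pt_filterlim; auto.
Qed.

Lemma const01 (f : R -> R) x l c : derivable_pt_lim f x l -> 0 <= x <= 1 ->
  (forall y, 0 <= y <= 1 -> f y = c) -> l = 0.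
Proof.
  intros H Hx Hc. destruct (Req_dec l 0) as [|Hl]; auto. exfalso.
  assert (Hal : 0 < Rabs l) by (apply Rabs_pos_lt; auto).
  destruct (H (Rabs l) Hal) as [d Hd].
  set (k := Rmin (d / 2) (1 / 2)).
  assert (Hk : 0 < k) by (unfold k; apply Rmin_pos; [destruct d; simpl; lra|lra]).
  assert (Hk1 : k <= d / 2) by apply Rmin_l.
  assert (Hk2 : k <= 1 / 2) by apply Rmin_r.
  assert (Hd0 : 0 < d) by apply cond_pos.
  destruct (Rle_dec x (1/2)).
  - specialize (Hd k ltac:(lra) ltac:(rewrite Rabs_right; lra)).
    rewrite (Hc (x + k)), (Hc x) in Hd by lra.
    unfold Rminus in Hd. rewrite Rplus_opp_r in Hd. unfold Rdiv in Hd.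
    rewrite Rmult_0_l, Rplus_0_l, Rabs_Ropp in Hd. lra.
  - specialize (Hd (- k) ltac:(lra) ltac:(rewrite Rabs_left; lra)).
    rewrite (Hc (x + - k)), (Hc x) in Hd by lra.
    unfold Rminus in Hd. rewrite Rplus_opp_r in Hd. unfold Rdiv in Hd.
    rewrite Rmult_0_l, Rplus_0_l, Rabs_Ropp in Hd. lra.
Qed.

Lemma mvt3 f df x u : (forall z, derivable_pt_lim f z (df z)) ->
  exists c, Rmin x u <= c <= Rmax x u /\ f u - f x = df c * (u - x).
Proof.
  intros Hd. destruct (Rtotal_order x u) as [Hlt|[Heq|Hgt]].
  - destruct (mvt f df x u Hlt) as [c [Hc1 Hc2]]; auto.
    + intros z Hz; apply der_cont with (df z); auto.
    + exists c; split; auto. rewrite Rmin_left, Rmax_right; lra.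
  - subst. exists u. split; [rewrite Rmin_left, Rmax_left; lra|]. ring.
  - destruct (mvt f df u x Hgt) as [c [Hc1 Hc2]]; auto.
    + intros z Hz; apply der_cont with (df z); auto.
    + exists c; split; [rewrite Rmin_right, Rmax_left; lra|lra].
Qed.

Lemma clamp_cont lo hi x : lo <= hi -> continuity_pt (clamp lo hi) x.
Proof.
  intros H. apply mk_cont. intros eps He. exists eps; split; auto.
  intros y Hy. eapply Rle_lt_trans; [apply clamp_lip; auto|]; auto.
Qed.

Lemma BC_cases (b : BC) : b = Periodic \/ b = Dirichlet.
Proof. destruct b; auto. Qed.

Lemma closed_lim (f : R -> R) c lo hi : continuity_pt f c -> 0 < c ->
  (forall s, 0 <= s < c -> lo <= f s <= hi) -> lo <= f c <= hi.
Proof.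
  intros Hc Hc0 H.
  destruct (Rle_dec lo (f c)) as [H1|H1]; destruct (Rle_dec (f c) hi) as [H2|H2]; auto; exfalso.
  - destruct (cont_elim f c Hc (f c - hi) ltac:(lra)) as [d [Hd Hd']].
    set (s := Rmax 0 (c - d / 2)).
    assert (0 <= s < c) by (unfold s, Rmax; destruct Rle_dec; lra).
    assert (Rabs (s - c) < d) by (unfold s, Rmax; destruct Rle_dec; apply Rabs_def1; lra).
    specialize (Hd' s H3). specialize (H s H0). apply Rabs_def2 in Hd'. lra.
  - destruct (cont_elim f c Hc (lo - f c) ltac:(lra)) as [d [Hd Hd']].
    set (s := Rmax 0 (c - d / 2)).
    assert (0 <= s < c) by (unfold s, Rmax; destruct Rle_dec; lra).
    assert (Rabs (s - c) < d) by (unfold s, Rmax; destruct Rle_dec; apply Rabs_def1; lra).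
    specialize (Hd' s H3). specialize (H s H0). apply Rabs_def2 in Hd'. lra.
  - destruct (cont_elim f c Hc (lo - f c) ltac:(lra)) as [d [Hd Hd']].
    set (s := Rmax 0 (c - d / 2)).
    assert (0 <= s < c) by (unfold s, Rmax; destruct Rle_dec; lra).
    assert (Rabs (s - c) < d) by (unfold s, Rmax; destruct Rle_dec; apply Rabs_def1; lra).
    specialize (Hd' s H3). specialize (H s H0). apply Rabs_def2 in Hd'. lra.
Qed.

Lemma lin2 (z dz q : R -> R) tau B : 0 <= tau -> 0 <= B ->
  (forall x, derivable_pt_lim z x (dz x)) -> (forall x, continuity_pt dz x) ->
  (forall x, 0 < x < tau -> derivable_pt_lim dz x (2 * q x * z x)) ->
  (forall x, 0 < x < tau -> Rabs (q x) <= B) -> z 0 = 0 -> dz 0 = 0 -> z tau = 0.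
Proof.
  intros Ht HB Hz Hdzc Hdz Hq Z0 DZ0.
  assert (G : (z tau * z tau + dz tau * dz tau) + 0 / (1 + 2 * B) <=
     ((z 0 * z 0 + dz 0 * dz 0) + 0 / (1 + 2 * B)) * exp ((1 + 2 * B) * (tau - 0))).
  { apply (gron_up (fun x => z x * z x + dz x * dz x)
       (fun x => (dz x * z x + z x * dz x) + (2 * q x * z x * dz x + dz x * (2 * q x * z x)))
       0 tau 0 (1 + 2 * B)); try lra.
    - intros x _. apply (cplus (fun x => z x * z x) (fun x => dz x * dz x)).
      + apply (cmul z z); apply der_cont with (dz x); auto.
      + apply (cmul dz dz); auto.
    - intros x Hx. apply (dplus (fun x => z x * z x) (fun x => dz x * dz x)).
      + apply (dmul z z); auto.
      + apply (dmul dz dz); auto.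
    - intros x Hx. specialize (Hq x Hx). cbv beta.
      assert (H1 : 2 * (z x * dz x) <= z x * z x + dz x * dz x)
        by (pose proof (Rle_0_sqr (z x - dz x)); unfold Rsqr in *; lra).
      assert (H2 : - (2 * (z x * dz x)) <= z x * z x + dz x * dz x)
        by (pose proof (Rle_0_sqr (z x + dz x)); unfold Rsqr in *; lra).
      apply Rabs_def2b in Hq.
      assert (H3 : 0 <= z x * z x + dz x * dz x)
        by (pose proof (Rle_0_sqr (z x)); pose proof (Rle_0_sqr (dz x)); unfold Rsqr in *; lra).
      assert (Eq : dz x * z x + z x * dz x + (2 * q x * z x * dz x + dz x * (2 * q x * z x))
         = 2 * (z x * dz x) + 4 * (q x * (z x * dz x))) by ring.
      rewrite Eq.
      assert (4 * (q x * (z x * dz x)) <= 2 * B * (z x * z x + dz x * dz x)).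
      { destruct (Rle_dec 0 (z x * dz x)) as [Hp|Hp].
        - assert (q x * (z x * dz x) <= B * (z x * dz x)) by (apply Rmult_le_compat_r; lra).
          assert (B * (2 * (z x * dz x)) <= B * (z x * z x + dz x * dz x))
            by (apply Rmult_le_compat_l; lra).
          lra.
        - apply Rnot_le_lt in Hp.
          assert ((q x + B) * (z x * dz x) <= 0).
          { rewrite Rmult_comm. rewrite <- (Rmult_0_r (z x * dz x)).
            apply Rmult_le_compat_neg_l; lra. }
          assert (B * (- (2 * (z x * dz x))) <= B * (z x * z x + dz x * dz x))
            by (apply Rmult_le_compat_l; lra).
          lra. }
      lra. }
  rewrite Z0, DZ0 in G.
  replace ((0 * 0 + 0 * 0 + 0 / (1 + 2 * B)) * exp ((1 + 2 * B) * (tau - 0))) with 0 in G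
    by (unfold Rdiv; ring).
  replace (0 / (1 + 2 * B)) with 0 in G by (unfold Rdiv; ring).
  assert (0 <= z tau * z tau) by apply Rle_0_sqr.
  assert (0 <= dz tau * dz tau) by apply Rle_0_sqr.
  assert (z tau * z tau = 0) by lra.
  destruct (Rmult_integral _ _ H1); auto.
Qed.

Section Main.
Variable bc : BC.
Variable T : R.
Variable u : R -> R -> R.
Variable D : nat -> nat -> R -> R -> R.
Variable gamma : R -> R -> R.
Variables eta Kbar : R -> R.
Hypothesis HT : 0 < T.
Hypothesis Hsm : smooth_derivs T u D.
Hypothesis Hbc : bc_holds bc T u.
Hypothesis Hpde : forall x t, 0 <= x <= 1 -> 0 <= t < T ->
     exists I, Rint (fun y => (D 1%nat 0%nat y t) ^ 2) 0 1 I /\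
       D 1%nat 1%nat x t + u x t * D 2%nat 0%nat x t - (D 1%nat 0%nat x t) ^ 2
         = -2 * I.
Hypothesis Hg0 : forall a, 0 <= a <= 1 -> gamma a 0 = a.
Hypothesis Hgd : forall a t, 0 <= a <= 1 -> 0 <= t < T ->
     deriv_within (fun s => 0 <= s < T) (fun s => gamma a s) t
       (u (gamma a t) t).
Hypothesis HK : forall t, 0 <= t < T ->
     Rint (fun b => / (1 - eta t * D 1%nat 0%nat b 0)) 0 1 (Kbar t).
Hypothesis Heta0 : eta 0 = 0.
Hypothesis Hetad : forall t, 0 <= t < T ->
     deriv_within (fun s => 0 <= s < T) eta t (/ (Kbar t) ^ 2).
Variable t0 : R.
Hypothesis Ht0 : 0 <= t0 < T.

Lemma D00 x s : D 0 0 x s = u x s.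
Proof. destruct Hsm as [H _]. apply H. Qed.
Lemma Dx i j x s : s < T -> derivable_pt_lim (fun y => D i j y s) x (D (S i) j x s).
Proof. destruct Hsm as [_ [H _]]. apply H. Qed.
Lemma Dt i j x s : s < T -> derivable_pt_lim (fun z => D i j x z) s (D i (S j) x s).
Proof. destruct Hsm as [_ [_ [H _]]]. apply H. Qed.
Lemma Dc i j x s : s < T -> cont2_lt T (D i j) x s.
Proof. destruct Hsm as [_ [_ [_ H]]]. apply H. Qed.

Lemma Dper (Hp : bc = Periodic) i j x s : s < T -> D i j (x + 1) s = D i j x s.
Proof.
  assert (Hu : forall x s, s < T -> u (x + 1) s = u x s).
  { rewrite Hp in Hbc. exact Hbc. }
  revert j x s. induction i as [|i IHi].
  - induction j as [|j IHj]; intros x s Hs.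
    + rewrite !D00. auto.
    + apply (uniqueness_limite (fun z => D 0 j x z) s); [|apply Dt; auto].
      apply (dext_loc (fun z => D 0 j (x + 1) z) _ s _ (T - s)); [lra| |apply Dt; auto].
      intros y Hy. apply IHj. apply Rabs_def2 in Hy; lra.
  - intros j x s Hs.
    apply (uniqueness_limite (fun y => D i j y s) x); [|apply Dx; auto].
    assert (H1 := Dx i j (x + 1) s Hs).
    apply mk_der. intros eps He. destruct (H1 eps He) as [d Hd].
    exists d. split; [apply cond_pos|]. intros h Hh Hhd.
    specialize (Hd h Hh Hhd). rewrite <- (IHi j x s Hs), <- (IHi j (x + h) s Hs).
    replace (x + h + 1) with (x + 1 + h) by ring. auto.
Qed.

Lemma Dper_nat (Hp : bc = Periodic) i j x s n : s < T -> D i j (x + INR n) s = D i j x s.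
Proof.
  intros Hs. induction n as [|n IH].
  - simpl. rewrite Rplus_0_r. auto.
  - rewrite S_INR, <- Rplus_assoc, Dper; auto.
Qed.

Lemma Dper_Z (Hp : bc = Periodic) i j x s z : s < T -> D i j (x + IZR z) s = D i j x s.
Proof.
  intros Hs. destruct z as [|p|p].
  - simpl. rewrite Rplus_0_r. auto.
  - replace (IZR (Z.pos p)) with (INR (Pos.to_nat p)).
    + apply Dper_nat; auto.
    + rewrite INR_IZR_INZ, positive_nat_Z. auto.
  - replace (IZR (Z.neg p)) with (- INR (Pos.to_nat p)).
    + rewrite <- (Dper_nat Hp i j (x + - INR (Pos.to_nat p)) s (Pos.to_nat p)); auto.
      f_equal. ring.
    + rewrite INR_IZR_INZ, positive_nat_Z, <- opp_IZR. auto.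
Qed.

Lemma Dper_red (Hp : bc = Periodic) i j x s : s < T ->
  D i j x s = D i j (x - IZR (Int_part x)) s.
Proof.
  intros Hs. rewrite <- (Dper_Z Hp i j (x - IZR (Int_part x)) s (Int_part x)); auto.
  f_equal; ring.
Qed.

Lemma red_in x : 0 <= x - IZR (Int_part x) <= 1.
Proof. destruct (base_Int_part x). lra. Qed.

Definition Iof s := RInt (fun y => D 1 0 y s ^ 2) 0 1.

Lemma Rint_RInt f a b I : Rint f a b I -> RInt f a b = I.
Proof. intros [pr Hpr]. rewrite <- Hpr. apply RInt_Reals. Qed.

Lemma pde0 x s : 0 <= x <= 1 -> 0 <= s < T ->
  D 1 1 x s + D 0 0 x s * D 2 0 x s - D 1 0 x s * D 1 0 x s = -2 * Iof s.
Proof.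
  intros Hx Hs. destruct (Hpde x s Hx Hs) as [I [HI HE]].
  apply Rint_RInt in HI. unfold Iof. rewrite HI, D00. rewrite <- HE. ring.
Qed.

Lemma pde1 x s : 0 <= x <= 1 -> 0 <= s < T ->
  D 2 1 x s + D 0 0 x s * D 3 0 x s - D 1 0 x s * D 2 0 x s = 0.
Proof.
  intros Hx Hs.
  assert (Hd : derivable_pt_lim (fun y => D 1 1 y s + D 0 0 y s * D 2 0 y s - D 1 0 y s * D 1 0 y s) x
     (D 2 1 x s + (D 1 0 x s * D 2 0 x s + D 0 0 x s * D 3 0 x s) -
      (D 2 0 x s * D 1 0 x s + D 1 0 x s * D 2 0 x s))).
  { apply (dminus (fun y => D 1 1 y s + D 0 0 y s * D 2 0 y s) (fun y => D 1 0 y s * D 1 0 y s)).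
    - apply (dplus (fun y => D 1 1 y s) (fun y => D 0 0 y s * D 2 0 y s)).
      + apply Dx; lra.
      + apply (dmul (fun y => D 0 0 y s) (fun y => D 2 0 y s)); apply Dx; lra.
    - apply (dmul (fun y => D 1 0 y s) (fun y => D 1 0 y s)); apply Dx; lra. }
  pose proof (const01 _ x _ (-2 * Iof s) Hd Hx (fun y Hy => pde0 y s Hy Hs)).
  lra.
Qed.

Lemma pde2 x s : 0 <= x <= 1 -> 0 <= s < T ->
  D 3 1 x s + D 0 0 x s * D 4 0 x s - D 2 0 x s * D 2 0 x s = 0.
Proof.
  intros Hx Hs.
  assert (Hd : derivable_pt_lim (fun y => D 2 1 y s + D 0 0 y s * D 3 0 y s - D 1 0 y s * D 2 0 y s) x
     (D 3 1 x s + (D 1 0 x s * D 3 0 x s + D 0 0 x s * D 4 0 x s) -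
      (D 2 0 x s * D 2 0 x s + D 1 0 x s * D 3 0 x s))).
  { apply (dminus (fun y => D 2 1 y s + D 0 0 y s * D 3 0 y s) (fun y => D 1 0 y s * D 2 0 y s)).
    - apply (dplus (fun y => D 2 1 y s) (fun y => D 0 0 y s * D 3 0 y s)).
      + apply Dx; lra.
      + apply (dmul (fun y => D 0 0 y s) (fun y => D 3 0 y s)); apply Dx; lra.
    - apply (dmul (fun y => D 1 0 y s) (fun y => D 2 0 y s)); apply Dx; lra. }
  pose proof (const01 _ x _ 0 Hd Hx (fun y Hy => pde1 y s Hy Hs)).
  lra.
Qed.

Definition Good x := bc = Dirichlet -> 0 <= x <= 1.

Lemma pde_good x s : Good x -> 0 <= s < T ->
  D 1 1 x s + D 0 0 x s * D 2 0 x s - D 1 0 x s * D 1 0 x s = -2 * Iof s /\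
  D 2 1 x s + D 0 0 x s * D 3 0 x s - D 1 0 x s * D 2 0 x s = 0 /\
  D 3 1 x s + D 0 0 x s * D 4 0 x s - D 2 0 x s * D 2 0 x s = 0.
Proof.
  intros Hg Hs. destruct (BC_cases bc) as [Ebc|Ebc].
  - assert (HsT : s < T) by lra.
    rewrite !(Dper_red Ebc _ _ x s HsT).
    pose proof (red_in x).
    split; [|split]; [apply pde0|apply pde1|apply pde2]; auto.
  - specialize (Hg Ebc).
    split; [|split]; [apply pde0|apply pde1|apply pde2]; auto.
Qed.

Definition Reg y := bc = Dirichlet -> -1 <= y <= 2.

Lemma bound_D i j : exists M, 0 < M /\ forall y s, Reg y -> 0 <= s <= t0 -> Rabs (D i j y s) <= M.
Proof.
  destruct (BC_cases bc) as [Ebc|Ebc].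
  - destruct (rect_bound (D i j) T 0 1 t0) as [M [HM HB]]; [lra|lra| |].
    { intros; apply Dc; auto. }
    exists M; split; [auto|]. intros y s _ Hs.
    rewrite (Dper_red Ebc i j y s) by lra. apply HB; auto. apply red_in.
  - destruct (rect_bound (D i j) T (-1) 2 t0) as [M [HM HB]]; [lra|lra| |].
    { intros; apply Dc; auto. }
    exists M; split; [auto|]. intros y s Hy Hs. apply HB; auto.
Qed.

Variable M : R.
Hypothesis HM0 : 0 < M.
Hypothesis HM : forall y s, Reg y -> 0 <= s <= t0 -> Rabs (D 1 0 y s) <= M.

Lemma lip_u y1 y2 s : Reg y1 -> Reg y2 -> 0 <= s <= t0 ->
  Rabs (D 0 0 y1 s - D 0 0 y2 s) <= M * Rabs (y1 - y2).
Proof.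
  intros H1 H2 Hs.
  destruct (mvt3 (fun y => D 0 0 y s) (fun y => D 1 0 y s) y2 y1) as [c [Hc1 Hc2]].
  { intros; apply Dx; lra. }
  rewrite Hc2, Rabs_mult. apply Rmult_le_compat_r; [apply Rabs_pos|].
  apply HM; auto. intros E. specialize (H1 E). specialize (H2 E).
  assert (Rmin y2 y1 >= -1) by (unfold Rmin; destruct Rle_dec; lra).
  assert (Rmax y2 y1 <= 2) by (unfold Rmax; destruct Rle_dec; lra). lra.
Qed.

Definition g a s := gamma a (clamp 0 t0 s).

Lemma g_cont a : 0 <= a <= 1 -> forall s, continuity_pt (g a) s.
Proof.
  intros Ha. unfold g. apply (cw_clamp (gamma a) 0 t0); [lra|].
  intros x Hx eps He.
  destruct (dw_cw _ _ _ _ (Hgd a x Ha ltac:(lra)) eps He) as [d [Hd H]].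
  exists d; split; auto. intros y Hy Hyx. apply H; auto. lra.
Qed.

Lemma g_der a s : 0 <= a <= 1 -> 0 < s < t0 -> derivable_pt_lim (g a) s (D 0 0 (g a s) s).
Proof.
  intros Ha Hs. unfold g. rewrite clamp_id by lra. rewrite D00.
  apply clamp_der; auto.
  apply (dw_interior (fun z => 0 <= z < T) _ _ _ 0 t0); [intros; lra|lra|].
  apply Hgd; auto; lra.
Qed.

Lemma g_0 a : 0 <= a <= 1 -> g a 0 = a.
Proof. intros Ha. unfold g. rewrite clamp_id by lra. auto. Qed.

Lemma clamp_t_cont s : continuity_pt (clamp 0 t0) s.
Proof. apply clamp_cont; lra. Qed.

Lemma along_cont i j (X : R -> R) s : (forall s, continuity_pt X s) ->
  continuity_pt (fun z => D i j (X z) (clamp 0 t0 z)) s.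
Proof.
  intros HX. assert (Hc := clamp_in 0 t0 s ltac:(lra)).
  apply (c2_comp (D i j) T X (clamp 0 t0) s); auto.
  - lra.
  - apply Dc; lra.
  - apply clamp_t_cont.
Qed.

Lemma along_der i j (X : R -> R) dX s : 0 < s < t0 -> derivable_pt_lim X s dX ->
  derivable_pt_lim (fun z => D i j (X z) (clamp 0 t0 z)) s
     (D (S i) j (X s) s * dX + D i (S j) (X s) s).
Proof.
  intros Hs HX.
  apply (dext_loc (fun z => D i j (X z) z) _ s _ (Rmin s (t0 - s))).
  { apply Rmin_pos; lra. }
  - intros y Hy. rewrite clamp_id; auto.
    assert (Rmin s (t0 - s) <= s) by apply Rmin_l.
    assert (Rmin s (t0 - s) <= t0 - s) by apply Rmin_r.
    apply Rabs_def2 in Hy. lra.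
  - apply (chain2 (D i j) (D (S i) j) (D i (S j)) T X dX s); auto.
    + lra.
    + intros; apply Dx; auto.
    + apply Dc; lra.
    + apply Dt; lra.
Qed.

Lemma pair_gron x1 x2 tau : 0 <= tau <= t0 ->
  (forall s, continuity_pt x1 s) -> (forall s, continuity_pt x2 s) ->
  (forall s, 0 < s < tau -> derivable_pt_lim x1 s (D 0 0 (x1 s) s)) ->
  (forall s, 0 < s < tau -> derivable_pt_lim x2 s (D 0 0 (x2 s) s)) ->
  (forall s, 0 <= s <= tau -> Reg (x1 s) /\ Reg (x2 s)) ->
  (x1 tau - x2 tau)^2 <= (x1 0 - x2 0)^2 * exp ((2 * M + 1) * (tau - 0)) /\
  (x1 0 - x2 0)^2 * exp (- ((2 * M + 1) * (tau - 0))) <= (x1 tau - x2 tau)^2.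
Proof.
  intros Htau Hc1 Hc2 Hd1 Hd2 HR.
  set (f := fun s => (x1 s - x2 s)^2).
  set (df := fun s => 2 * (x1 s - x2 s) * (D 0 0 (x1 s) s - D 0 0 (x2 s) s)).
  assert (Hfc : forall s, continuity_pt f s).
  { intros s. unfold f. simpl.
    apply (cmul (fun s => x1 s - x2 s) (fun s => (x1 s - x2 s) * 1)).
    - apply cminus; auto.
    - apply (cmul (fun s => x1 s - x2 s) (fun _ => 1)); [apply cminus; auto|apply cconst]. }
  assert (Hfd : forall s, 0 < s < tau -> derivable_pt_lim f s (df s)).
  { intros s Hs. unfold f, df.
    apply (dext (fun s => (x1 s - x2 s) * (x1 s - x2 s))); [intros; ring|].
    replace (2 * (x1 s - x2 s) * (D 0 0 (x1 s) s - D 0 0 (x2 s) s)) with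
      ((D 0 0 (x1 s) s - D 0 0 (x2 s) s) * (x1 s - x2 s) + (x1 s - x2 s) * (D 0 0 (x1 s) s - D 0 0 (x2 s) s)) by ring.
    apply (dmul (fun s => x1 s - x2 s) (fun s => x1 s - x2 s));
      apply (dminus x1 x2); auto. }
  assert (Hb : forall s, 0 < s < tau -> Rabs (df s) <= (2 * M + 1) * f s).
  { intros s Hs. destruct (HR s ltac:(lra)) as [R1 R2].
    pose proof (lip_u (x1 s) (x2 s) s R1 R2 ltac:(lra)).
    unfold df, f. rewrite !Rabs_mult.
    assert (Rabs 2 = 2) by (rewrite Rabs_right; lra).
    pose proof (Rabs_pos (x1 s - x2 s)).
    pose proof (Rabs_pos (D 0 0 (x1 s) s - D 0 0 (x2 s) s)).
    replace ((x1 s - x2 s)^2) with (Rabs (x1 s - x2 s) * Rabs (x1 s - x2 s)).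
    2: { rewrite <- Rabs_mult. simpl. rewrite Rmult_1_r. apply Rabs_right.
         apply Rle_ge, Rle_0_sqr. }
    nra. }
  split.
  - pose proof (gron_up f df 0 tau 0 (2 * M + 1) ltac:(lra) ltac:(lra)
       (fun s _ => Hfc s) Hfd) as G.
    unfold Rdiv in G. rewrite Rmult_0_l, !Rplus_0_r in G. apply G.
    intros s Hs. specialize (Hb s Hs). apply Rabs_def2b in Hb. lra.
  - apply (gron_low f df 0 tau (2 * M + 1)); auto; try lra.
    intros s Hs. specialize (Hb s Hs). apply Rabs_def2b in Hb. lra.
Qed.

Lemma const_traj (Hd : bc = Dirichlet) (k : R) s : (k = 0 \/ k = 1) -> 0 < s < t0 ->
  derivable_pt_lim (fun _ => k) s (D 0 0 ((fun _ => k) s) s).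
Proof.
  intros Hk Hs. pose proof Hbc as Hb. rewrite Hd in Hb. simpl in Hb.
  rewrite D00. destruct (Hb s ltac:(lra)) as [B0 B1].
  destruct Hk as [->| ->]; [rewrite B0|rewrite B1]; apply dconst.
Qed.

Lemma confine (Hd : bc = Dirichlet) a : 0 <= a <= 1 ->
  forall s, 0 <= s <= t0 -> 0 <= g a s <= 1.
Proof.
  intros Ha. apply (real_ind 0 t0); [lra|].
  intros c Hc IH.
  assert (Pc : 0 <= g a c <= 1).
  { destruct (Req_dec c 0) as [->|Hne].
    - rewrite g_0; auto.
    - apply closed_lim; auto. apply g_cont; auto. lra. }
  destruct (cont_elim (g a) c (g_cont a Ha c) (1/2) ltac:(lra)) as [r [Hr Hcr]].
  exists r; split; auto. intros s Hs Hst.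
  assert (HRg : forall sg, 0 <= sg <= s -> Reg (g a sg)).
  { intros sg Hsg _. destruct (Rlt_dec sg c).
    - specialize (IH sg ltac:(lra)). lra.
    - assert (Rabs (sg - c) < r) by (apply Rabs_def1; lra).
      specialize (Hcr sg H). apply Rabs_def2 in Hcr. lra. }
  assert (Hconst : forall k, (k = 0 \/ k = 1) -> forall tau, 0 <= tau <= s ->
     (g a tau - k)^2 <= (a - k)^2 * exp ((2 * M + 1) * (tau - 0)) /\
     (a - k)^2 * exp (- ((2 * M + 1) * (tau - 0))) <= (g a tau - k)^2).
  { intros k Hk tau Htau.
    destruct (pair_gron (g a) (fun _ => k) tau) as [P1 P2].
    - lra.
    - apply g_cont; auto.
    - intros; apply cconst.
    - intros; apply g_der; auto; lra.
    - intros; apply const_traj; auto; lra.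
    - intros sg Hsg. split; [apply HRg; lra|]. intros _. destruct Hk; subst; lra.
    - rewrite g_0 in P1, P2 by auto. split; auto. }
  assert (Hnz : forall k, (k = 0 \/ k = 1) -> a <> k -> forall tau, 0 <= tau <= s -> g a tau <> k).
  { intros k Hk Hak tau Htau E. destruct (Hconst k Hk tau Htau) as [_ HL].
    rewrite E in HL. replace ((k - k)^2) with 0 in HL by ring.
    assert (0 < (a - k)^2) by (assert (a - k <> 0) by lra; simpl; rewrite Rmult_1_r; apply Rsqr_pos_lt; auto).
    pose proof (exp_pos (- ((2 * M + 1) * (tau - 0)))). nra. }
  split.
  - destruct (Req_dec a 0) as [->|Ha0].
    + destruct (Hconst 0 (or_introl eq_refl) s ltac:(lra)) as [HU _].
      replace ((0 - 0)^2) with 0 in HU by ring. rewrite Rmult_0_l in HU.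
      assert ((g 0 s - 0)^2 >= 0) by (apply Rle_ge, pow2_ge_0). 
      assert (g 0 s = 0) by nra. lra.
    + destruct (Rle_dec 0 (g a s)) as [|Hneg]; auto. exfalso.
      assert (Hs0 : 0 < s).
      { destruct (Req_dec s 0) as [->|]; [rewrite g_0 in Hneg; auto; lra|lra]. }
      destruct (IVT (fun z => - g a z) 0 s) as [z [Hz1 Hz2]]; auto.
      * intros z. apply (continuity_pt_opp (g a)). apply g_cont; auto.
      * rewrite g_0; auto. lra.
      * lra.
      * apply (Hnz 0 (or_introl eq_refl) Ha0 z Hz1). lra.
  - destruct (Req_dec a 1) as [->|Ha1].
    + destruct (Hconst 1 (or_intror eq_refl) s ltac:(lra)) as [HU _].
      replace ((1 - 1)^2) with 0 in HU by ring. rewrite Rmult_0_l in HU.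
      assert ((g 1 s - 1)^2 >= 0) by (apply Rle_ge, pow2_ge_0).
      assert (g 1 s - 1 = 0) by nra. lra.
    + destruct (Rle_dec (g a s) 1) as [|Hneg]; auto. exfalso.
      assert (Hs0 : 0 < s).
      { destruct (Req_dec s 0) as [->|]; [rewrite g_0 in Hneg; auto; lra|lra]. }
      destruct (IVT (fun z => g a z - 1) 0 s) as [z [Hz1 Hz2]]; auto.
      * intros z. apply (cminus (g a) (fun _ => 1)); [apply g_cont; auto|apply cconst].
      * rewrite g_0; auto. lra.
      * lra.
      * apply (Hnz 1 (or_intror eq_refl) Ha1 z Hz1). lra.
Qed.

Lemma g_good a s : 0 <= a <= 1 -> 0 <= s <= t0 -> Good (g a s) /\ Reg (g a s).
Proof.
  intros Ha Hs. split.
  - intros Hd. apply confine; auto.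
  - intros Hd. pose proof (confine Hd a Ha s Hs). lra.
Qed.

Lemma g_span s : 0 <= s <= t0 -> g 1 s - g 0 s = 1.
Proof.
  intros Hs. destruct (BC_cases bc) as [Ebc|Ebc].
  - destruct (pair_gron (g 1) (fun z => g 0 z + 1) s Hs) as [HU _].
    + apply g_cont; lra.
    + intros z. apply (cplus (g 0) (fun _ => 1)); [apply g_cont; lra|apply cconst].
    + intros; apply g_der; lra.
    + intros z Hz. rewrite (Dper Ebc) by lra.
      replace (D 0 0 (g 0 z) z) with (D 0 0 (g 0 z) z + 0) by ring.
      apply (dplus (g 0) (fun _ => 1)); [apply g_der; lra|apply dconst].
    + intros z Hz. split; intros E; rewrite Ebc in E; discriminate.
    + rewrite !g_0 in HU by lra. replace ((1 - (0 + 1))^2) with 0 in HU by ring.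
      rewrite Rmult_0_l in HU.
      assert ((g 1 s - (g 0 s + 1))^2 >= 0) by (apply Rle_ge, pow2_ge_0).
      assert (g 1 s - (g 0 s + 1) = 0) by nra. lra.
  - assert (H0 : forall k, (k = 0 \/ k = 1) -> g k s = k).
    { intros k Hk.
      assert (Hk' : 0 <= k <= 1) by (destruct Hk; subst; lra).
      destruct (pair_gron (g k) (fun _ => k) s Hs) as [HU _].
      + apply g_cont; auto.
      + intros; apply cconst.
      + intros; apply g_der; auto; lra.
      + intros; apply const_traj; auto; lra.
      + intros z Hz. split; [apply g_good; auto; lra|]. intros _; lra.
      + rewrite g_0 in HU by auto. replace ((k - k)^2) with 0 in HU by ring.
        rewrite Rmult_0_l in HU.
        assert ((g k s - k)^2 >= 0) by (apply Rle_ge, pow2_ge_0).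
        assert (g k s - k = 0) by nra. lra. }
    rewrite (H0 1), (H0 0); auto. lra.
Qed.

Definition wc a s := D 1 0 (g a s) (clamp 0 t0 s).
Definition W a s := RInt (wc a) 0 s.
Definition P a s := exp (- W a s).

Lemma wc_cont a : 0 <= a <= 1 -> forall s, continuity_pt (wc a) s.
Proof. intros Ha s. unfold wc. apply along_cont. apply g_cont; auto. Qed.

Lemma W_der a s : 0 <= a <= 1 -> derivable_pt_lim (W a) s (wc a s).
Proof. intros Ha. unfold W. apply rint_der. apply wc_cont; auto. Qed.

Lemma W_0 a : W a 0 = 0.
Proof. unfold W. rewrite RInt_point. reflexivity. Qed.

Lemma P_der a s : 0 <= a <= 1 -> derivable_pt_lim (P a) s (- wc a s * P a s).
Proof.
  intros Ha. unfold P.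
  replace (- wc a s * exp (- W a s)) with (exp (- W a s) * (- wc a s)) by ring.
  apply (dexp (fun z => - W a z)). apply (derivable_pt_lim_opp (W a)). apply W_der; auto.
Qed.

Lemma P_pos a s : 0 < P a s.
Proof. apply exp_pos. Qed.
Lemma P_0 a : P a 0 = 1.
Proof. unfold P. rewrite W_0, Ropp_0. apply exp_0. Qed.
Lemma P_cont a s : 0 <= a <= 1 -> continuity_pt (P a) s.
Proof. intros Ha. apply der_cont with (- wc a s * P a s). apply P_der; auto. Qed.

Lemma wc_der a s : 0 <= a <= 1 -> 0 < s < t0 ->
  derivable_pt_lim (wc a) s (wc a s * wc a s - 2 * Iof s).
Proof.
  intros Ha Hs. unfold wc. rewrite clamp_id by lra.
  destruct (g_good a s Ha ltac:(lra)) as [Gd _].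
  destruct (pde_good (g a s) s Gd ltac:(lra)) as [E0 _].
  replace (D 1 0 (g a s) s * D 1 0 (g a s) s - 2 * Iof s) with
    (D 2 0 (g a s) s * D 0 0 (g a s) s + D 1 1 (g a s) s) by lra.
  apply along_der; auto. apply g_der; auto.
Qed.

Lemma dP_der a s : 0 <= a <= 1 -> 0 < s < t0 ->
  derivable_pt_lim (fun z => - wc a z * P a z) s (2 * Iof s * P a s).
Proof.
  intros Ha Hs.
  apply (dext (fun z => - (wc a z * P a z))); [intros; ring|].
  replace (2 * Iof s * P a s) with
    (- ((wc a s * wc a s - 2 * Iof s) * P a s + wc a s * (- wc a s * P a s))) by ring.
  apply (derivable_pt_lim_opp (fun z => wc a z * P a z)).
  apply (dmul (wc a) (P a)); [apply wc_der; auto|apply P_der; auto].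
Qed.

Lemma uxx_P a s : 0 <= a <= 1 -> 0 <= s <= t0 ->
  D 2 0 (g a s) (clamp 0 t0 s) * P a s = D 2 0 a 0.
Proof.
  intros Ha Hs.
  set (f := fun z => D 2 0 (g a z) (clamp 0 t0 z) * P a z).
  assert (E : f s = f 0).
  { apply (const_der f (fun _ => 0) 0 s); try lra.
    - intros z Hz. unfold f.
      destruct (g_good a z Ha ltac:(lra)) as [Gd _].
      destruct (pde_good (g a z) z Gd ltac:(lra)) as [_ [E1 _]].
      assert (HD : derivable_pt_lim f z
        ((D 3 0 (g a z) z * D 0 0 (g a z) z + D 2 1 (g a z) z) * P a z +
         D 2 0 (g a z) (clamp 0 t0 z) * (- wc a z * P a z))).
      { apply (dmul (fun z => D 2 0 (g a z) (clamp 0 t0 z)) (P a)).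
        + apply along_der; [lra|]. apply g_der; auto; lra.
        + apply P_der; auto. }
      replace ((D 3 0 (g a z) z * D 0 0 (g a z) z + D 2 1 (g a z) z) * P a z +
         D 2 0 (g a z) (clamp 0 t0 z) * (- wc a z * P a z)) with 0 in HD; auto.
      unfold wc. rewrite clamp_id by lra.
      replace (D 3 0 (g a z) z * D 0 0 (g a z) z + D 2 1 (g a z) z) with
             (D 1 0 (g a z) z * D 2 0 (g a z) z) by lra. ring.
    - intros; reflexivity.
    - intros z Hz. unfold f. apply (cmul (fun z => D 2 0 (g a z) (clamp 0 t0 z)) (P a)).
      + apply along_cont. apply g_cont; auto.
      + apply P_cont; auto. }
  unfold f in E. rewrite E, P_0, g_0, clamp_id by lra. ring.
Qed.

Lemma uxxx_der a s : 0 <= a <= 1 -> 0 < s < t0 ->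
  derivable_pt_lim (fun z => D 3 0 (g a z) (clamp 0 t0 z)) s
    (D 2 0 (g a s) s * D 2 0 (g a s) s).
Proof.
  intros Ha Hs.
  destruct (g_good a s Ha ltac:(lra)) as [Gd _].
  destruct (pde_good (g a s) s Gd ltac:(lra)) as [_ [_ E2]].
  replace (D 2 0 (g a s) s * D 2 0 (g a s) s) with
    (D 4 0 (g a s) s * D 0 0 (g a s) s + D 3 1 (g a s) s) by lra.
  apply along_der; auto. apply g_der; auto.
Qed.

Definition E a s := exp (W a s).
Lemma E_P a s : E a s = / P a s.
Proof. unfold E, P. rewrite exp_Ropp, Rinv_inv. auto. Qed.
Lemma E_der a s : 0 <= a <= 1 -> derivable_pt_lim (E a) s (E a s * wc a s).
Proof. intros Ha. unfold E. apply (dexp (W a)). apply W_der; auto. Qed.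
Lemma E_0 a : E a 0 = 1.
Proof. unfold E. rewrite W_0. apply exp_0. Qed.
Lemma E_cont a s : 0 <= a <= 1 -> continuity_pt (E a) s.
Proof. intros Ha. apply der_cont with (E a s * wc a s). apply E_der; auto. Qed.

Definition C1 := exp ((2 * M + 1) * t0).
Lemma C1_ge1 : 1 <= C1.
Proof.
  unfold C1. assert (H : 0 <= (2 * M + 1) * t0) by nra.
  destruct H as [H|H].
  - pose proof (exp_increasing 0 _ H). rewrite exp_0 in H0. lra.
  - rewrite <- H, exp_0. lra.
Qed.

Lemma exp_le_C1 s : 0 <= s <= t0 -> exp ((2 * M + 1) * (s - 0)) <= C1.
Proof.
  intros Hs. unfold C1. destruct (Req_dec s t0) as [->|]; [rewrite Rminus_0_r; lra|].
  left. apply exp_increasing. apply Rmult_lt_compat_l; lra.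
Qed.

Lemma pair_bound a b s : 0 <= a <= 1 -> 0 <= b <= 1 -> 0 <= s <= t0 ->
  Rabs (g b s - g a s) <= Rabs (b - a) * C1.
Proof.
  intros Ha Hb Hs.
  destruct (pair_gron (g b) (g a) s Hs) as [HU _].
  - apply g_cont; auto.
  - apply g_cont; auto.
  - intros; apply g_der; auto; lra.
  - intros; apply g_der; auto; lra.
  - intros z Hz. split; apply g_good; auto; lra.
  - rewrite !g_0 in HU by auto.
    pose proof (exp_le_C1 s Hs). pose proof C1_ge1.
    assert (Hsq : (g b s - g a s)² <= (Rabs (b - a) * C1)²).
    { rewrite Rsqr_mult, <- Rsqr_abs. unfold Rsqr.
      assert (0 <= (b - a) * (b - a)) by (pose proof (Rle_0_sqr (b - a)); unfold Rsqr in *; lra).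
      replace ((g b s - g a s)^2) with ((g b s - g a s) * (g b s - g a s)) in HU by ring.
      replace ((b - a)^2) with ((b - a) * (b - a)) in HU by ring.
      apply Rle_trans with (1 := HU).
      apply Rmult_le_compat_l; auto. nra. }
    apply Rsqr_le_abs_0 in Hsq. rewrite (Rabs_right (Rabs (b - a) * C1)) in Hsq; auto.
    apply Rle_ge. apply Rmult_le_pos; [apply Rabs_pos|lra].
Qed.

Lemma dgamma a tau : 0 <= a <= 1 -> 0 <= tau <= t0 ->
  deriv_within (fun b => 0 <= b <= 1) (fun b => gamma b tau) a (E a tau).
Proof.
  intros Ha Htau eps He.
  pose proof C1_ge1 as HC1.
  set (L := 2 * M + 1).
  set (eps1 := eps / (2 * (C1 * C1))).
  assert (He1 : 0 < eps1) by (unfold eps1; apply Rdiv_lt_0_compat; nra).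
  destruct (ucurve (D 1 0) T t0 (g a) Ht0 (fun y s Hs => Dc 1 0 y s Hs) (g_cont a Ha)
     eps1 He1) as [dU [HdU HU]].
  exists (dU / C1). split; [apply Rdiv_lt_0_compat; lra|].
  intros h Hh Hhd Hb. cbv beta in Hb.
  set (b := a + h) in *.
  assert (Hh0 : 0 < Rabs h) by (apply Rabs_pos_lt; auto).
  assert (Hdb : forall s, 0 <= s <= t0 -> Rabs (g b s - g a s) <= Rabs h * C1).
  { intros s Hs. replace (Rabs h) with (Rabs (b - a)) by (unfold b; f_equal; ring).
    apply pair_bound; auto. }
  assert (HhC : Rabs h * C1 < dU).
  { apply Rmult_lt_reg_r with (/ C1). { apply Rinv_0_lt_compat; lra. }
    rewrite Rmult_assoc, Rinv_r by lra. rewrite Rmult_1_r. exact Hhd. }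
  set (e := fun s => g b s - g a s - h * E a s).
  set (de := fun s => D 0 0 (g b s) s - D 0 0 (g a s) s - h * (E a s * wc a s)).
  set (A0 := eps1 * (Rabs h * C1)).
  assert (HA0 : 0 <= A0) by (unfold A0; apply Rmult_le_pos; [lra|apply Rmult_le_pos; lra]).
  assert (Hdeb : forall s, 0 < s < tau -> Rabs (de s) <= A0 + M * Rabs (e s)).
  { intros s Hs.
    destruct (mvt3 (fun y => D 0 0 y s) (fun y => D 1 0 y s) (g a s) (g b s)) as [c [Hc1 Hc2]].
    { intros; apply Dx; lra. }
    assert (Hgd1 := Hdb s ltac:(lra)).
    assert (Hcg : Rabs (c - g a s) < dU).
    { apply Rle_lt_trans with (Rabs (g b s - g a s)); [|lra].
      unfold Rmin, Rmax in Hc1; destruct Rle_dec;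
      unfold Rabs; repeat destruct Rcase_abs; lra. }
    assert (HUc := HU s c ltac:(lra) Hcg).
    assert (Hwc : wc a s = D 1 0 (g a s) s) by (unfold wc; rewrite clamp_id; auto; lra).
    assert (Hwb : Rabs (wc a s) <= M).
    { rewrite Hwc. apply HM; [apply g_good; auto; lra|lra]. }
    assert (Ede : de s = (D 1 0 c s - D 1 0 (g a s) s) * (g b s - g a s) + wc a s * e s).
    { unfold de, e. cbv beta in Hc2. rewrite Hc2, Hwc. ring. }
    rewrite Ede. eapply Rle_trans; [apply Rabs_triang|]. rewrite !Rabs_mult.
    apply Rplus_le_compat.
    - unfold A0. apply Rmult_le_compat; try apply Rabs_pos; lra.
    - apply Rmult_le_compat_r; [apply Rabs_pos|auto]. }
  assert (He_cont : forall s, continuity_pt e s).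
  { intros s. unfold e.
    apply (cminus (fun s => g b s - g a s) (fun s => h * E a s)).
    - apply cminus; apply g_cont; auto.
    - apply (cmul (fun _ => h) (E a)); [apply cconst|apply E_cont; auto]. }
  assert (He_der : forall s, 0 < s < tau -> derivable_pt_lim e s (de s)).
  { intros s Hs. unfold e, de.
    apply (dminus (fun s => g b s - g a s) (fun s => h * E a s)).
    - apply dminus; apply g_der; auto; lra.
    - replace (h * (E a s * wc a s)) with (0 * E a s + h * (E a s * wc a s)) by ring.
      apply (dmul (fun _ => h) (E a)); [apply dconst|apply E_der; auto]. }
  assert (G : e tau * e tau + A0 * A0 / L <= (e 0 * e 0 + A0 * A0 / L) * exp (L * (tau - 0))).
  { apply (gron_up (fun s => e s * e s) (fun s => 2 * e s * de s) 0 tau (A0 * A0) L);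
      try lra; [unfold L; lra| | |].
    - intros s _. apply (cmul e e); auto.
    - intros s Hs. replace (2 * e s * de s) with (de s * e s + e s * de s) by ring.
      apply (dmul e e); auto.
    - intros s Hs. specialize (Hdeb s Hs).
      assert (2 * e s * de s <= 2 * (Rabs (e s) * Rabs (de s))).
      { rewrite <- Rabs_mult. pose proof (Rle_abs (e s * de s)). lra. }
      assert (Rabs (e s) * Rabs (e s) = e s * e s) by (rewrite <- Rabs_mult; apply Rabs_right; nra).
      pose proof (Rabs_pos (e s)). pose proof (Rabs_pos (de s)).
      assert (Rabs (e s) * Rabs (de s) <= Rabs (e s) * (A0 + M * Rabs (e s)))
        by (apply Rmult_le_compat_l; auto).
      assert (0 <= (Rabs (e s) - A0) * (Rabs (e s) - A0)) by (apply Rle_0_sqr).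
      assert (M * (Rabs (e s) * Rabs (e s)) = M * (e s * e s)) by (f_equal; auto).
      unfold L. lra. }
  assert (He0 : e 0 = 0).
  { unfold e. rewrite !g_0, E_0 by auto. unfold b. ring. }
  rewrite He0 in G. pose proof (exp_le_C1 tau Htau) as HexpC. fold L in HexpC.
  assert (HL : 1 <= L) by (unfold L; lra).
  assert (Hsq : (e tau)² <= (A0 * C1)²).
  { unfold Rsqr.
    assert (A0 * A0 / L <= A0 * A0).
    { unfold Rdiv. rewrite <- (Rmult_1_r (A0 * A0)) at 2. apply Rmult_le_compat_l; [nra|].
      rewrite <- Rinv_1. apply Rinv_le_contravar; lra. }
    assert (0 <= A0 * A0 / L) by (apply Rdiv_le_0_compat; nra).
    assert (e tau * e tau <= A0 * A0 / L * exp (L * (tau - 0))) by nra.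
    assert (A0 * A0 / L * exp (L * (tau - 0)) <= A0 * A0 * C1) by nra.
    assert (A0 * A0 * C1 <= A0 * C1 * (A0 * C1)) by nra.
    lra. }
  apply Rsqr_le_abs_0 in Hsq. rewrite (Rabs_right (A0 * C1)) in Hsq by nra.
  replace ((gamma b tau - gamma a tau) / h - E a tau) with (e tau / h).
  2: { unfold e, g. rewrite !clamp_id by lra. field. auto. }
  unfold Rdiv. rewrite Rabs_mult, Rabs_inv.
  apply Rle_lt_trans with (A0 * C1 * / Rabs h).
  { apply Rmult_le_compat_r; auto. left; apply Rinv_0_lt_compat; auto. }
  replace (A0 * C1 * / Rabs h) with (eps / 2); [lra|].
  unfold A0, eps1. field. split; lra.
Qed.

Lemma Iof_bound s : 0 <= s <= t0 -> Rabs (Iof s) <= M * M.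
Proof.
  intros Hs. unfold Iof.
  replace (M * M) with ((1 - 0) * (M * M)) by ring.
  apply abs_RInt_le_const; [lra| |].
  - apply rint_ex. intros y. simpl.
    apply (cmul (fun y => D 1 0 y s) (fun y => D 1 0 y s * 1)).
    + apply der_cont with (D 2 0 y s). apply Dx; lra.
    + apply (cmul (fun y => D 1 0 y s) (fun _ => 1)); [|apply cconst].
      apply der_cont with (D 2 0 y s). apply Dx; lra.
  - intros y Hy. assert (HR : Reg y) by (intros _; lra).
    specialize (HM y s HR Hs). simpl. rewrite Rmult_1_r, Rabs_mult.
    apply Rmult_le_compat; try apply Rabs_pos; auto.
Qed.

Lemma wc_0 a : 0 <= a <= 1 -> wc a 0 = D 1 0 a 0.
Proof. intros Ha. unfold wc. rewrite g_0, clamp_id by lra. auto. Qed.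

Lemma P_comb a b1 b2 k : 0 <= a <= 1 -> 0 <= b1 <= 1 -> 0 <= b2 <= 1 ->
  D 1 0 a 0 = (1 - k) * D 1 0 b1 0 + k * D 1 0 b2 0 ->
  forall s, 0 <= s <= t0 -> P a s = (1 - k) * P b1 s + k * P b2 s.
Proof.
  intros Ha H1 H2 Hk s Hs.
  set (z := fun x => P a x - (1 - k) * P b1 x - k * P b2 x).
  set (dz := fun x => - wc a x * P a x - (1 - k) * (- wc b1 x * P b1 x) - k * (- wc b2 x * P b2 x)).
  assert (Hdz : forall x, derivable_pt_lim z x (dz x)).
  { intros x. unfold z, dz.
    apply (dminus (fun x => P a x - (1 - k) * P b1 x) (fun x => k * P b2 x)).
    - apply (dminus (P a) (fun x => (1 - k) * P b1 x)); [apply P_der; auto|].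
      replace ((1 - k) * (- wc b1 x * P b1 x)) with (0 * P b1 x + (1 - k) * (- wc b1 x * P b1 x)) by ring.
      apply (dmul (fun _ => 1 - k) (P b1)); [apply dconst|apply P_der; auto].
    - replace (k * (- wc b2 x * P b2 x)) with (0 * P b2 x + k * (- wc b2 x * P b2 x)) by ring.
      apply (dmul (fun _ => k) (P b2)); [apply dconst|apply P_der; auto]. }
  assert (Hwp : forall b x, 0 <= b <= 1 -> continuity_pt (fun x => - wc b x * P b x) x).
  { intros b x Hb. apply (cmul (fun x => - wc b x) (P b)).
    - apply (continuity_pt_opp (wc b)). apply wc_cont; auto.
    - apply P_cont; auto. }
  assert (Hdzc : forall x, continuity_pt dz x).
  { intros x. unfold dz.
    apply (cminus (fun x => - wc a x * P a x - (1 - k) * (- wc b1 x * P b1 x))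
                  (fun x => k * (- wc b2 x * P b2 x))).
    - apply (cminus (fun x => - wc a x * P a x) (fun x => (1 - k) * (- wc b1 x * P b1 x))).
      + apply Hwp; auto.
      + apply (cmul (fun _ => 1 - k) (fun x => - wc b1 x * P b1 x)); [apply cconst|apply Hwp; auto].
    - apply (cmul (fun _ => k) (fun x => - wc b2 x * P b2 x)); [apply cconst|apply Hwp; auto]. }
  assert (Z : z s = 0).
  { apply (lin2 z dz Iof s (M * M)); auto; try lra.
    - apply Rmult_le_pos; lra.
    - intros x Hx. unfold dz.
      replace (2 * Iof x * z x) with
        (2 * Iof x * P a x - (1 - k) * (2 * Iof x * P b1 x) - k * (2 * Iof x * P b2 x))
        by (unfold z; ring).
      apply (dminus (fun x => - wc a x * P a x - (1 - k) * (- wc b1 x * P b1 x))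
                    (fun x => k * (- wc b2 x * P b2 x))).
      + apply (dminus (fun x => - wc a x * P a x) (fun x => (1 - k) * (- wc b1 x * P b1 x))).
        * apply dP_der; auto; lra.
        * replace ((1 - k) * (2 * Iof x * P b1 x)) with
            (0 * (- wc b1 x * P b1 x) + (1 - k) * (2 * Iof x * P b1 x)) by ring.
          apply (dmul (fun _ => 1 - k) (fun x => - wc b1 x * P b1 x)); [apply dconst|].
          apply dP_der; auto; lra.
      + replace (k * (2 * Iof x * P b2 x)) with
            (0 * (- wc b2 x * P b2 x) + k * (2 * Iof x * P b2 x)) by ring.
        apply (dmul (fun _ => k) (fun x => - wc b2 x * P b2 x)); [apply dconst|].
        apply dP_der; auto; lra.
    - intros x Hx. apply Iof_bound; lra.
    - unfold z. rewrite !P_0. ring.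
    - unfold dz. rewrite !P_0, !wc_0 by auto. rewrite Hk. ring. }
  unfold z in Z. lra.
Qed.

Lemma xi_ex : exists xi, 0 < xi < 1 /\ D 1 0 xi 0 = 0.
Proof.
  destruct (mvt (fun y => D 0 0 y 0) (fun y => D 1 0 y 0) 0 1) as [c [Hc1 Hc2]]; [lra| | |].
  - intros; apply Dx; lra.
  - intros; apply der_cont with (D 1 0 x 0); apply Dx; lra.
  - exists c; split; auto.
    assert (E : D 0 0 1 0 = D 0 0 0 0).
    { destruct (BC_cases bc) as [Ebc|Ebc].
      - replace 1 with (0 + 1) at 1 by ring. apply Dper; auto; lra.
      - pose proof Hbc as Hb. rewrite Ebc in Hb. simpl in Hb.
        destruct (Hb 0 ltac:(lra)) as [B0 B1]. rewrite !D00, B0, B1. auto. }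
    rewrite E in Hc2. lra.
Qed.

Lemma D10_0_cont x : continuity_pt (fun y => D 1 0 y 0) x.
Proof. apply der_cont with (D 2 0 x 0). apply Dx; lra. Qed.

Lemma D10_clamp_cont x : continuity_pt (fun b => D 1 0 (clamp 0 1 b) 0) x.
Proof.
  apply (ccomp (clamp 0 1) (fun y => D 1 0 y 0)); [apply clamp_cont; lra|apply D10_0_cont].
Qed.

Lemma int_one s y1 y2 : 0 <= s <= t0 ->
  (forall b, 0 <= b <= 1 -> P b s = y1 - D 1 0 b 0 * y2) ->
  RInt (fun b => / (y1 - D 1 0 (clamp 0 1 b) 0 * y2)) 0 1 = 1.
Proof.
  intros Hs HP.
  set (h := fun b => / (y1 - D 1 0 (clamp 0 1 b) 0 * y2)).
  assert (Hden : forall b, y1 - D 1 0 (clamp 0 1 b) 0 * y2 = P (clamp 0 1 b) s).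
  { intros b. rewrite HP; auto. apply clamp_in; lra. }
  assert (Hhc : forall b, continuity_pt h b).
  { intros b. unfold h. apply (cinv (fun b => y1 - D 1 0 (clamp 0 1 b) 0 * y2)).
    - apply (cminus (fun _ => y1) (fun b => D 1 0 (clamp 0 1 b) 0 * y2)); [apply cconst|].
      apply (cmul (fun b => D 1 0 (clamp 0 1 b) 0) (fun _ => y2)); [apply D10_clamp_cont|apply cconst].
    - rewrite Hden. apply Rgt_not_eq, P_pos. }
  set (Phi := fun b => gamma (clamp 0 1 b) s - RInt h 0 b).
  assert (E1 : Phi 1 = Phi 0).
  { apply (const_der Phi (fun _ => 0) 0 1); try lra.
    - intros b Hb. unfold Phi.
      assert (HD : derivable_pt_lim Phi b (E b s - h b)).
      { apply (dminus (fun b => gamma (clamp 0 1 b) s) (fun b => RInt h 0 b)).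
        - apply (clamp_der (fun b => gamma b s)); auto.
          apply (dw_interior (fun b => 0 <= b <= 1) _ _ _ 0 1); auto.
          apply dgamma; lra.
        - apply rint_der; auto. }
      replace (E b s - h b) with 0 in HD; auto.
      unfold h. rewrite Hden, clamp_id by lra. rewrite E_P. ring.
    - intros; reflexivity.
    - intros b Hb. unfold Phi.
      apply (cminus (fun b => gamma (clamp 0 1 b) s) (fun b => RInt h 0 b)).
      + apply (cw_clamp (fun b => gamma b s) 0 1); [lra|].
        intros x Hx eps He.
        destruct (dw_cw _ _ _ _ (dgamma x s Hx Hs) eps He) as [d [Hd H]].
        exists d; split; auto.
      + apply der_cont with (h b). apply rint_der; auto. }
  unfold Phi in E1. rewrite RInt_point in E1. rewrite !clamp_id in E1 by lra.
  pose proof (g_span s Hs) as Hsp. unfold g in Hsp. rewrite clamp_id in Hsp by lra.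
  change (zero : R) with 0 in E1. fold h. lra.
Qed.

Definition Kf e := RInt (fun b => / (1 - e * D 1 0 (clamp 0 1 b) 0)) 0 1.

Lemma Kbar_Kf s : 0 <= s < T -> Kbar s = Kf (eta s).
Proof.
  intros Hs. rewrite <- (Rint_RInt _ _ _ _ (HK s Hs)). unfold Kf.
  apply RInt_ext. intros x Hx. rewrite Rmin_left, Rmax_right in Hx by lra.
  rewrite clamp_id by lra. auto.
Qed.

Lemma RInt_const01 (c : R) : RInt (fun _ => c) 0 1 = c.
Proof. rewrite RInt_const. unfold scal; simpl. unfold mult; simpl. ring. Qed.

Lemma keyA (HA : forall b, 0 <= b <= 1 -> D 1 0 b 0 = 0) a s : 0 <= a <= 1 -> 0 <= s <= t0 ->
  P a s = Kbar s * (1 - eta s * D 1 0 a 0) /\ 0 < Kbar s.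
Proof.
  intros Ha Hs. destruct xi_ex as [xi [Hxi Hxi0]].
  assert (Hall : forall b, 0 <= b <= 1 -> P b s = P xi s - D 1 0 b 0 * 0).
  { intros b Hb. rewrite Rmult_0_r, Rminus_0_r.
    rewrite (P_comb b xi xi 0); auto; try lra.
    rewrite HA, Hxi0; auto. ring. }
  pose proof (int_one s (P xi s) 0 Hs Hall) as HI.
  rewrite (RInt_ext _ (fun _ => / P xi s)) in HI.
  2: { intros x _. rewrite Rmult_0_r, Rminus_0_r. auto. }
  rewrite RInt_const01 in HI.
  assert (HP1 : P xi s = 1).
  { pose proof (P_pos xi s). rewrite <- (Rinv_inv (P xi s)), HI. apply Rinv_1. }
  assert (HK1 : Kbar s = 1).
  { rewrite Kbar_Kf by lra. unfold Kf.
    rewrite (RInt_ext _ (fun _ => 1)). { apply RInt_const01. }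
    intros x Hx. rewrite Rmin_left, Rmax_right in Hx by lra.
    rewrite HA by (apply clamp_in; lra). rewrite Rmult_0_r, Rminus_0_r. apply Rinv_1. }
  rewrite Hall, HP1, HK1, HA by auto. split; [ring|lra].
Qed.

Lemma kf_int_cont e : (forall b, 0 <= b <= 1 -> 1 - e * D 1 0 b 0 <> 0) ->
  forall x, continuity_pt (fun b => / (1 - e * D 1 0 (clamp 0 1 b) 0)) x.
Proof.
  intros Hne x. apply (cinv (fun b => 1 - e * D 1 0 (clamp 0 1 b) 0)).
  - apply (cminus (fun _ => 1) (fun b => e * D 1 0 (clamp 0 1 b) 0)); [apply cconst|].
    apply (cmul (fun _ => e) (fun b => D 1 0 (clamp 0 1 b) 0)); [apply cconst|apply D10_clamp_cont].
  - apply Hne. apply clamp_in; lra.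
Qed.

Lemma D10_0_bound b : 0 <= b <= 1 -> Rabs (D 1 0 b 0) <= M.
Proof. intros Hb. apply HM; [intros _; lra|lra]. Qed.

Lemma Kf_bounds e lo hi : 0 < lo -> (forall b, 0 <= b <= 1 -> lo <= 1 - e * D 1 0 b 0 <= hi) ->
  / hi <= Kf e <= / lo.
Proof.
  intros Hlo Hb.
  assert (Hne : forall b, 0 <= b <= 1 -> 1 - e * D 1 0 b 0 <> 0)
    by (intros b Hb'; specialize (Hb b Hb'); lra).
  assert (Hex : ex_RInt (fun b => / (1 - e * D 1 0 (clamp 0 1 b) 0)) 0 1)
    by (apply rint_ex, kf_int_cont; auto).
  unfold Kf. split.
  - rewrite <- (RInt_const01 (/ hi)). apply RInt_le; [lra|apply rint_ex; intros; apply cconst|auto|].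
    intros x Hx. specialize (Hb (clamp 0 1 x) (clamp_in 0 1 x ltac:(lra))).
    apply Rinv_le_contravar; lra.
  - rewrite <- (RInt_const01 (/ lo)). apply RInt_le; [lra|auto|apply rint_ex; intros; apply cconst|].
    intros x Hx. specialize (Hb (clamp 0 1 x) (clamp_in 0 1 x ltac:(lra))).
    apply Rinv_le_contravar; lra.
Qed.

Lemma Kf_lipK e1 e2 m : 0 < m ->
  (forall b, 0 <= b <= 1 -> m <= 1 - e1 * D 1 0 b 0) ->
  (forall b, 0 <= b <= 1 -> m <= 1 - e2 * D 1 0 b 0) ->
  Rabs (Kf e1 - Kf e2) <= M / (m * m) * Rabs (e1 - e2).
Proof.
  intros Hm H1 H2.
  assert (Hex1 : ex_RInt (fun b => / (1 - e1 * D 1 0 (clamp 0 1 b) 0)) 0 1)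
    by (apply rint_ex, kf_int_cont; intros b Hb; specialize (H1 b Hb); lra).
  assert (Hex2 : ex_RInt (fun b => / (1 - e2 * D 1 0 (clamp 0 1 b) 0)) 0 1)
    by (apply rint_ex, kf_int_cont; intros b Hb; specialize (H2 b Hb); lra).
  unfold Kf. change (RInt (fun b => / (1 - e1 * D 1 0 (clamp 0 1 b) 0)) 0 1 -
    RInt (fun b => / (1 - e2 * D 1 0 (clamp 0 1 b) 0)) 0 1) with
    (minus (RInt (fun b => / (1 - e1 * D 1 0 (clamp 0 1 b) 0)) 0 1)
      (RInt (fun b => / (1 - e2 * D 1 0 (clamp 0 1 b) 0)) 0 1)).
  rewrite <- RInt_minus by auto.
  replace (M / (m * m) * Rabs (e1 - e2)) with ((1 - 0) * (M / (m * m) * Rabs (e1 - e2))) by ring.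
  apply abs_RInt_le_const; [lra| |].
  - apply ex_RInt_minus; auto.
  - intros x Hx. set (c := D 1 0 (clamp 0 1 x) 0).
    assert (Hc : 0 <= clamp 0 1 x <= 1) by (apply clamp_in; lra).
    specialize (H1 _ Hc). specialize (H2 _ Hc). fold c in H1, H2.
    assert (Hcb : Rabs c <= M) by (apply D10_0_bound; auto).
    change (minus (/ (1 - e1 * c)) (/ (1 - e2 * c))) with (/ (1 - e1 * c) - / (1 - e2 * c)).
    replace (/ (1 - e1 * c) - / (1 - e2 * c)) with
      ((e1 - e2) * c / ((1 - e1 * c) * (1 - e2 * c))) by (field; lra).
    unfold Rdiv. rewrite !Rabs_mult, Rabs_inv, Rabs_mult.
    rewrite (Rabs_right (1 - e1 * c)), (Rabs_right (1 - e2 * c)) by lra.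
    assert (m * m <= (1 - e1 * c) * (1 - e2 * c)) by (apply Rmult_le_compat; lra).
    assert (Hi : / ((1 - e1 * c) * (1 - e2 * c)) <= / (m * m))
      by (apply Rinv_le_contravar; [nra|lra]).
    assert (0 <= / ((1 - e1 * c) * (1 - e2 * c))) by (left; apply Rinv_0_lt_compat; nra).
    pose proof (Rabs_pos (e1 - e2)). pose proof (Rabs_pos c).
    apply Rle_trans with (Rabs (e1 - e2) * M * / (m * m)).
    + apply Rmult_le_compat; [apply Rmult_le_pos; auto|auto|apply Rmult_le_compat_l; auto|auto].
    + right. ring.
Qed.

Lemma F_lip e1 e2 lo hi : 0 < lo ->
  (forall b, 0 <= b <= 1 -> lo <= 1 - e1 * D 1 0 b 0 <= hi) ->
  (forall b, 0 <= b <= 1 -> lo <= 1 - e2 * D 1 0 b 0 <= hi) ->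
  Rabs (/ (Kf e1) ^ 2 - / (Kf e2) ^ 2) <=
    (M / (lo * lo) * (2 / lo) * (hi * hi * (hi * hi))) * Rabs (e1 - e2).
Proof.
  intros Hlo H1 H2.
  assert (Hhi : lo <= hi) by (destruct (H1 0 ltac:(lra)); lra).
  destruct (Kf_bounds e1 lo hi Hlo H1) as [K1l K1u].
  destruct (Kf_bounds e2 lo hi Hlo H2) as [K2l K2u].
  pose proof (Kf_lipK e1 e2 lo Hlo ltac:(intros b Hb; apply H1; auto) ltac:(intros b Hb; apply H2; auto)) as HL.
  set (K1 := Kf e1) in *. set (K2 := Kf e2) in *.
  assert (Hih : 0 < / hi) by (apply Rinv_0_lt_compat; lra).
  assert (P1 : 0 < K1) by lra. assert (P2 : 0 < K2) by lra.
  replace (/ K1 ^ 2 - / K2 ^ 2) with ((K2 - K1) * (K2 + K1) * (/ (K1 * K2) * / (K1 * K2))).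
  2: { field. split; lra. }
  rewrite !Rabs_mult. rewrite (Rabs_right (K2 + K1)) by lra.
  rewrite (Rabs_right (/ (K1 * K2))) by (left; apply Rinv_0_lt_compat; nra).
  rewrite (Rabs_minus_sym K2 K1).
  assert (HI : / (K1 * K2) <= hi * hi).
  { rewrite <- (Rinv_inv (hi * hi)). apply Rinv_le_contravar; [apply Rinv_0_lt_compat; nra|].
    rewrite Rinv_mult. apply Rmult_le_compat; lra. }
  assert (HS : K2 + K1 <= 2 / lo) by (unfold Rdiv; lra).
  assert (0 <= / (K1 * K2)) by (left; apply Rinv_0_lt_compat; nra).
  pose proof (Rabs_pos (K1 - K2)). pose proof (Rabs_pos (e1 - e2)).
  assert (0 <= M / (lo * lo)) by (apply Rdiv_le_0_compat; nra).
  assert (HC : / (K1 * K2) * / (K1 * K2) <= hi * hi * (hi * hi)) by (apply Rmult_le_compat; auto).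
  assert (HA : Rabs (K1 - K2) <= M / (lo * lo) * Rabs (e1 - e2)) by exact HL.
  apply Rle_trans with (M / (lo * lo) * Rabs (e1 - e2) * (2 / lo) * (hi * hi * (hi * hi))).
  - apply Rmult_le_compat.
    + apply Rmult_le_pos; lra.
    + apply Rmult_le_pos; auto.
    + apply Rmult_le_compat; lra.
    + auto.
  - right. ring.
Qed.

Section CaseB.
Variables xi a2 : R.
Hypothesis Hxi : 0 < xi < 1.
Hypothesis Hxi0 : D 1 0 xi 0 = 0.
Hypothesis Ha2 : 0 <= a2 <= 1.
Hypothesis Hc2 : D 1 0 a2 0 <> 0.

Definition y1 s := P xi s.
Definition y2 s := (P xi s - P a2 s) / D 1 0 a2 0.
Definition dy1 s := - wc xi s * P xi s.
Definition dy2 s := (- wc xi s * P xi s - - wc a2 s * P a2 s) / D 1 0 a2 0.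

Lemma Hxi' : 0 <= xi <= 1.
Proof. lra. Qed.

Lemma y1_der s : derivable_pt_lim y1 s (dy1 s).
Proof. apply P_der; apply Hxi'. Qed.

Lemma y2_der s : derivable_pt_lim y2 s (dy2 s).
Proof.
  unfold y2, dy2, Rdiv.
  replace ((- wc xi s * P xi s - - wc a2 s * P a2 s) * / D 1 0 a2 0) with
    ((- wc xi s * P xi s - - wc a2 s * P a2 s) * / D 1 0 a2 0 + (P xi s - P a2 s) * 0) by ring.
  apply (dmul (fun s => P xi s - P a2 s) (fun _ => / D 1 0 a2 0)); [|apply dconst].
  apply (dminus (P xi) (P a2)); apply P_der; auto; apply Hxi'.
Qed.

Lemma dy1_der s : 0 < s < t0 -> derivable_pt_lim dy1 s (2 * Iof s * y1 s).
Proof. intros Hs. apply dP_der; auto; apply Hxi'. Qed.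

Lemma dy2_der s : 0 < s < t0 -> derivable_pt_lim dy2 s (2 * Iof s * y2 s).
Proof.
  intros Hs. unfold y2, dy2, Rdiv.
  replace (2 * Iof s * ((P xi s - P a2 s) * / D 1 0 a2 0)) with
    ((2 * Iof s * P xi s - 2 * Iof s * P a2 s) * / D 1 0 a2 0 +
     (- wc xi s * P xi s - - wc a2 s * P a2 s) * 0) by ring.
  apply (dmul (fun s => - wc xi s * P xi s - - wc a2 s * P a2 s) (fun _ => / D 1 0 a2 0));
    [|apply dconst].
  apply (dminus (fun s => - wc xi s * P xi s) (fun s => - wc a2 s * P a2 s));
    apply dP_der; auto; apply Hxi'.
Qed.

Lemma wP_cont b x : 0 <= b <= 1 -> continuity_pt (fun x => - wc b x * P b x) x.
Proof.
  intros Hb. apply (cmul (fun x => - wc b x) (P b)).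
  - apply (continuity_pt_opp (wc b)). apply wc_cont; auto.
  - apply P_cont; auto.
Qed.

Lemma dy1_cont s : continuity_pt dy1 s.
Proof. apply wP_cont. apply Hxi'. Qed.
Lemma dy2_cont s : continuity_pt dy2 s.
Proof.
  unfold dy2. apply (cmul (fun s => - wc xi s * P xi s - - wc a2 s * P a2 s) (fun _ => / D 1 0 a2 0));
    [|apply cconst].
  apply (cminus (fun s => - wc xi s * P xi s) (fun s => - wc a2 s * P a2 s)); apply wP_cont; auto.
  apply Hxi'.
Qed.
Lemma y1_cont s : continuity_pt y1 s.
Proof. apply der_cont with (dy1 s). apply y1_der. Qed.
Lemma y2_cont s : continuity_pt y2 s.
Proof. apply der_cont with (dy2 s). apply y2_der. Qed.
Lemma y1_pos s : 0 < y1 s.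
Proof. apply P_pos. Qed.

Lemma Plin a s : 0 <= a <= 1 -> 0 <= s <= t0 -> P a s = y1 s - D 1 0 a 0 * y2 s.
Proof.
  intros Ha Hs. rewrite (P_comb a xi a2 (D 1 0 a 0 / D 1 0 a2 0)); auto.
  - unfold y1, y2. field. auto.
  - apply Hxi'.
  - rewrite Hxi0. field. auto.
Qed.

Lemma omega s : 0 <= s <= t0 -> y1 s * dy2 s - dy1 s * y2 s = 1.
Proof.
  intros Hs.
  assert (E : (fun z => y1 z * dy2 z - dy1 z * y2 z) s = (fun z => y1 z * dy2 z - dy1 z * y2 z) 0).
  { apply (const_der (fun z => y1 z * dy2 z - dy1 z * y2 z) (fun _ => 0) 0 s); try lra.
    - intros z Hz.
      assert (HD : derivable_pt_lim (fun z => y1 z * dy2 z - dy1 z * y2 z) z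
        ((dy1 z * dy2 z + y1 z * (2 * Iof z * y2 z)) - (2 * Iof z * y1 z * y2 z + dy1 z * dy2 z))).
      { apply (dminus (fun z => y1 z * dy2 z) (fun z => dy1 z * y2 z)).
        - apply (dmul y1 dy2); [apply y1_der|apply dy2_der; lra].
        - apply (dmul dy1 y2); [apply dy1_der; lra|apply y2_der]. }
      replace ((dy1 z * dy2 z + y1 z * (2 * Iof z * y2 z)) - (2 * Iof z * y1 z * y2 z + dy1 z * dy2 z))
        with 0 in HD by ring. exact HD.
    - intros; reflexivity.
    - intros z _. apply (cminus (fun z => y1 z * dy2 z) (fun z => dy1 z * y2 z)).
      + apply (cmul y1 dy2); [apply y1_cont|apply dy2_cont].
      + apply (cmul dy1 y2); [apply dy1_cont|apply y2_cont]. }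
  cbv beta in E. rewrite E. unfold y1, y2, dy1, dy2. rewrite !P_0, !wc_0; auto; [|apply Hxi'].
  rewrite Hxi0. field. auto.
Qed.

Definition et s := y2 s / y1 s.

Lemma et_der s : 0 <= s <= t0 -> derivable_pt_lim et s (/ (y1 s) ^ 2).
Proof.
  intros Hs. unfold et.
  assert (HD := ddiv y2 y1 s (dy2 s) (dy1 s) (y2_der s) (y1_der s)
     (Rgt_not_eq _ _ (y1_pos s))).
  replace (/ y1 s ^ 2) with ((dy2 s * y1 s - dy1 s * y2 s) / (y1 s)²); auto.
  replace (dy2 s * y1 s - dy1 s * y2 s) with 1 by (rewrite <- (omega s Hs); ring).
  unfold Rsqr. pose proof (y1_pos s). field. lra.
Qed.

Lemma et_cont s : continuity_pt et s.
Proof.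
  unfold et. apply (continuity_pt_div y2 y1); [apply y2_cont|apply y1_cont|].
  apply Rgt_not_eq, y1_pos.
Qed.

Lemma et_margin s b : 0 <= s <= t0 -> 0 <= b <= 1 -> 1 - et s * D 1 0 b 0 = P b s / y1 s.
Proof.
  intros Hs Hb. rewrite Plin by auto. unfold et. pose proof (y1_pos s). field. lra.
Qed.

Lemma et_margin_pos s b : 0 <= s <= t0 -> 0 <= b <= 1 -> 0 < 1 - et s * D 1 0 b 0.
Proof.
  intros Hs Hb. rewrite et_margin by auto. apply Rdiv_lt_0_compat; [apply P_pos|apply y1_pos].
Qed.

Lemma y1_Kf s : 0 <= s <= t0 -> Kf (et s) = y1 s.
Proof.
  intros Hs.
  pose proof (int_one s (y1 s) (y2 s) Hs (fun b Hb => Plin b s Hb Hs)) as HI.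
  assert (Hden : forall x, y1 s - D 1 0 (clamp 0 1 x) 0 * y2 s = P (clamp 0 1 x) s).
  { intros x. rewrite Plin; auto. apply clamp_in; lra. }
  assert (Hex : ex_RInt (fun b => / (y1 s - D 1 0 (clamp 0 1 b) 0 * y2 s)) 0 1).
  { apply rint_ex. intros x. apply (cinv (fun b => y1 s - D 1 0 (clamp 0 1 b) 0 * y2 s)).
    - apply (cminus (fun _ => y1 s) (fun b => D 1 0 (clamp 0 1 b) 0 * y2 s)); [apply cconst|].
      apply (cmul (fun b => D 1 0 (clamp 0 1 b) 0) (fun _ => y2 s));
        [apply D10_clamp_cont|apply cconst].
    - rewrite Hden. apply Rgt_not_eq, P_pos. }
  unfold Kf. rewrite (RInt_ext _ (fun b => scal (y1 s) (/ (y1 s - D 1 0 (clamp 0 1 b) 0 * y2 s)))).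
  - rewrite (@RInt_scal R_CompleteNormedModule) by auto. rewrite HI. unfold scal; simpl. unfold mult; simpl. ring.
  - intros x _. unfold scal; simpl. unfold mult; simpl.
    assert (H0 := Hden x). pose proof (P_pos (clamp 0 1 x) s). pose proof (y1_pos s).
    unfold et. field. split; [|lra].
    replace (y1 s - D 1 0 (clamp 0 1 x) 0 * y2 s) with (P (clamp 0 1 x) s) by auto. lra.
Qed.

Definition etc s := eta (clamp 0 t0 s).

Lemma etc_cont s : continuity_pt etc s.
Proof.
  unfold etc. apply (cw_clamp eta 0 t0); [lra|].
  intros x Hx eps He.
  destruct (dw_cw _ _ _ _ (Hetad x ltac:(lra)) eps He) as [d [Hd H]].
  exists d; split; auto. intros y Hy Hyx. apply H; auto. lra.
Qed.

Lemma etc_der s : 0 < s < t0 -> derivable_pt_lim etc s (/ (Kbar s) ^ 2).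
Proof.
  intros Hs. unfold etc. apply clamp_der; auto.
  apply (dw_interior (fun z => 0 <= z < T) _ _ _ 0 t0); [intros; lra|lra|].
  apply Hetad; lra.
Qed.

Lemma eta_eq s : 0 <= s <= t0 -> eta s = et s.
Proof.
  revert s. apply (real_ind 0 t0); [lra|].
  intros c Hc IH.
  assert (Pc : etc c = et c).
  { destruct (Req_dec c 0) as [->|Hne].
    - unfold etc. rewrite clamp_id, Heta0 by lra. unfold et, y1, y2.
      rewrite !P_0. field. auto.
    - assert (H := closed_lim (fun s => etc s - et s) c 0 0).
      assert (0 <= etc c - et c <= 0); [|lra].
      apply H; [|lra|].
      + apply (cminus etc et); [apply etc_cont|apply et_cont].
      + intros s Hs. unfold etc. rewrite clamp_id by lra. rewrite IH by lra. lra. }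
  set (e0 := et c).
  destruct (continuity_ab_min (fun b => 1 - e0 * D 1 0 b 0) 0 1) as [mb [Hmb1 Hmb2]]; [lra| |].
  { intros b _. apply (cminus (fun _ => 1) (fun b => e0 * D 1 0 b 0)); [apply cconst|].
    apply (cmul (fun _ => e0) (fun b => D 1 0 b 0)); [apply cconst|apply D10_0_cont]. }
  set (m := 1 - e0 * D 1 0 mb 0).
  assert (Hm : 0 < m) by (apply et_margin_pos; auto).
  set (rho := m / (2 * M)).
  assert (Hrho : 0 < rho) by (apply Rdiv_lt_0_compat; lra).
  set (hi := 1 + (Rabs e0 + rho) * M).
  assert (Hmarg : forall e b, Rabs (e - e0) <= rho -> 0 <= b <= 1 ->
      m / 2 <= 1 - e * D 1 0 b 0 <= hi).
  { intros e b He Hb. specialize (Hmb1 b Hb). cbv beta in Hmb1.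
    pose proof (D10_0_bound b Hb) as Hcb.
    assert (Rabs ((e - e0) * D 1 0 b 0) <= rho * M)
      by (rewrite Rabs_mult; apply Rmult_le_compat; auto; apply Rabs_pos).
    assert (rho * M = m / 2) by (unfold rho; field; lra).
    assert (Rabs (e * D 1 0 b 0) <= (Rabs e0 + rho) * M).
    { rewrite Rabs_mult. apply Rmult_le_compat; auto; try apply Rabs_pos.
      replace e with (e0 + (e - e0)) by ring.
      eapply Rle_trans; [apply Rabs_triang|]. lra. }
    apply Rabs_def2b in H. apply Rabs_def2b in H1. fold m in Hmb1. unfold hi. lra. }
  set (Lc := M / (m / 2 * (m / 2)) * (2 / (m / 2)) * (hi * hi * (hi * hi))).
  assert (HLc : 0 <= Lc).
  { unfold Lc. assert (0 < hi) by (unfold hi; pose proof (Rabs_pos e0); nra).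
    apply Rmult_le_pos; [apply Rmult_le_pos|]; [apply Rdiv_le_0_compat; nra|
      apply Rdiv_le_0_compat; lra| nra]. }
  destruct (cont_elim etc c (etc_cont c) rho Hrho) as [r1 [Hr1 H1]].
  destruct (cont_elim et c (et_cont c) rho Hrho) as [r2 [Hr2 H2]].
  exists (Rmin r1 r2). split; [apply Rmin_pos; auto|].
  intros s Hs Hst.
  assert (Hm1 : Rmin r1 r2 <= r1) by apply Rmin_l.
  assert (Hm2 : Rmin r1 r2 <= r2) by apply Rmin_r.
  set (d := fun z => etc z - et z).
  assert (G : d s * d s + 0 / (2 * Lc + 1) <= (d c * d c + 0 / (2 * Lc + 1)) * exp ((2 * Lc + 1) * (s - c))).
  { apply (gron_up (fun z => d z * d z)
      (fun z => 2 * d z * (/ (Kbar z) ^ 2 - / (y1 z) ^ 2)) c s 0 (2 * Lc + 1)); try lra.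
    - intros z _. apply (cmul d d); apply (cminus etc et); try apply etc_cont; apply et_cont.
    - intros z Hz. replace (2 * d z * (/ Kbar z ^ 2 - / y1 z ^ 2)) with
        ((/ Kbar z ^ 2 - / y1 z ^ 2) * d z + d z * (/ Kbar z ^ 2 - / y1 z ^ 2)) by ring.
      apply (dmul d d); apply (dminus etc et);
        [apply etc_der; lra|apply et_der; lra|apply etc_der; lra|apply et_der; lra].
    - intros z Hz. cbv beta.
      assert (Hz1 : Rabs (etc z - e0) < rho) by (unfold e0; rewrite <- Pc; apply H1; apply Rabs_def1; lra).
      assert (Hz2 : Rabs (et z - e0) < rho) by (apply H2; apply Rabs_def1; lra).
      assert (Ez1 : etc z = eta z) by (unfold etc; rewrite clamp_id; auto; lra).
      rewrite Ez1 in Hz1.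
      rewrite Kbar_Kf by lra. rewrite <- (y1_Kf z) by lra.
      assert (HF := F_lip (eta z) (et z) (m / 2) hi ltac:(lra)
         (fun b Hb => Hmarg (eta z) b ltac:(lra) Hb) (fun b Hb => Hmarg (et z) b ltac:(lra) Hb)).
      fold Lc in HF. unfold d. rewrite Ez1.
      set (x := eta z - et z) in *.
      set (F := / Kf (eta z) ^ 2 - / Kf (et z) ^ 2) in *.
      assert (2 * x * F <= 2 * (Rabs x * Rabs F)).
      { rewrite <- Rabs_mult. pose proof (Rle_abs (x * F)). lra. }
      assert (Rabs x * Rabs F <= Rabs x * (Lc * Rabs x)) by (apply Rmult_le_compat_l; auto; apply Rabs_pos).
      assert (Rabs x * Rabs x = x * x) by (rewrite <- Rabs_mult; apply Rabs_right; nra).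
      assert (Lc * (Rabs x * Rabs x) = Lc * (x * x)) by (f_equal; auto).
      assert (0 <= x * x) by nra.
      lra. }
  unfold d in G. rewrite Pc in G.
  replace ((et c - et c) * (et c - et c) + 0 / (2 * Lc + 1)) with 0 in G by (unfold Rdiv; ring).
  rewrite Rmult_0_l in G. replace (0 / (2 * Lc + 1)) with 0 in G by (unfold Rdiv; ring).
  assert (0 <= (etc s - et s) * (etc s - et s)) by apply Rle_0_sqr.
  assert ((etc s - et s) * (etc s - et s) = 0) by lra.
  apply Rmult_integral in H0. unfold etc in H0. rewrite clamp_id in H0 by lra. lra.
Qed.

Lemma keyB a s : 0 <= a <= 1 -> 0 <= s <= t0 ->
  P a s = Kbar s * (1 - eta s * D 1 0 a 0) /\ 0 < Kbar s.
Proof.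
  intros Ha Hs. rewrite Kbar_Kf, eta_eq, y1_Kf by lra. split.
  - rewrite Plin by auto. unfold et. pose proof (y1_pos s). field. lra.
  - apply y1_pos.
Qed.

End CaseB.

Lemma key a s : 0 <= a <= 1 -> 0 <= s <= t0 ->
  P a s = Kbar s * (1 - eta s * D 1 0 a 0) /\ 0 < Kbar s.
Proof.
  intros Ha Hs. destruct xi_ex as [xi [Hxi Hxi0]].
  destruct (classic (exists a2, 0 <= a2 <= 1 /\ D 1 0 a2 0 <> 0)) as [[a2 [Ha2 Hc2]]|HN].
  - apply (keyB xi a2); auto.
  - apply keyA; auto. intros b Hb. apply NNPP. intros Hne. apply HN. exists b; auto.
Qed.

Lemma J_pos a s : 0 <= a <= 1 -> 0 <= s <= t0 -> 0 < 1 - eta s * D 1 0 a 0.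
Proof.
  intros Ha Hs. destruct (key a s Ha Hs) as [E1 E2]. pose proof (P_pos a s).
  rewrite E1 in H. apply (Rmult_lt_reg_l (Kbar s)); auto. lra.
Qed.

Definition Jc a s := 1 - etc s * D 1 0 a 0.

Lemma uxxx_formula a : 0 <= a <= 1 ->
  D 3 0 (gamma a t0) t0 = D 3 0 a 0 + eta t0 * (D 2 0 a 0) ^ 2 / (1 - eta t0 * D 1 0 a 0).
Proof.
  intros Ha.
  set (c := D 1 0 a 0). set (q := D 2 0 a 0).
  assert (HJc : forall s, 0 < Jc a s).
  { intros s. unfold Jc, etc. apply J_pos; auto. apply clamp_in; lra. }
  set (Z := fun s => D 3 0 (g a s) (clamp 0 t0 s) - q ^ 2 * (etc s / Jc a s)).
  assert (EZ : Z t0 = Z 0).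
  { apply (const_der Z (fun _ => 0) 0 t0); try lra.
    - intros s Hs.
      assert (HD : derivable_pt_lim Z s
        (D 2 0 (g a s) s * D 2 0 (g a s) s -
         (0 * (etc s / Jc a s) + q ^ 2 *
           ((/ Kbar s ^ 2 * Jc a s - (0 - (/ Kbar s ^ 2 * c + etc s * 0)) * etc s) / (Jc a s)²)))).
      { apply (dminus (fun s => D 3 0 (g a s) (clamp 0 t0 s)) (fun s => q ^ 2 * (etc s / Jc a s))).
        - apply uxxx_der; auto.
        - apply (dmul (fun _ => q ^ 2) (fun s => etc s / Jc a s)); [apply dconst|].
          apply (ddiv etc (Jc a)); [apply etc_der; auto| |apply Rgt_not_eq, HJc].
          unfold Jc. apply (dminus (fun _ => 1) (fun s => etc s * c)); [apply dconst|].
          apply (dmul etc (fun _ => c)); [apply etc_der; auto|apply dconst]. }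
      replace (D 2 0 (g a s) s * D 2 0 (g a s) s -
         (0 * (etc s / Jc a s) + q ^ 2 *
           ((/ Kbar s ^ 2 * Jc a s - (0 - (/ Kbar s ^ 2 * c + etc s * 0)) * etc s) / (Jc a s)²)))
        with 0 in HD; auto.
      assert (Hs' : 0 <= s <= t0) by lra.
      destruct (key a s Ha Hs') as [EP HKb].
      pose proof (uxx_P a s Ha Hs') as HU. rewrite clamp_id in HU by lra.
      assert (EJ : Jc a s = 1 - eta s * c) by (unfold Jc, etc; rewrite clamp_id; auto; lra).
      pose proof (J_pos a s Ha Hs') as HJ. fold c in HJ, EP.
      assert (E2 : D 2 0 (g a s) s = q / (Kbar s * Jc a s)).
      { rewrite EJ, <- EP. pose proof (P_pos a s). unfold q. rewrite <- HU. field. lra. }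
      rewrite E2. rewrite EJ. unfold etc. rewrite clamp_id by lra. unfold Rsqr. field.
      split; lra.
    - intros; reflexivity.
    - intros s _. unfold Z.
      apply (cminus (fun s => D 3 0 (g a s) (clamp 0 t0 s)) (fun s => q ^ 2 * (etc s / Jc a s))).
      + apply along_cont. apply g_cont; auto.
      + apply (cmul (fun _ => q ^ 2) (fun s => etc s / Jc a s)); [apply cconst|].
        apply (continuity_pt_div etc (Jc a)); [apply etc_cont| |apply Rgt_not_eq, HJc].
        unfold Jc. apply (cminus (fun _ => 1) (fun s => etc s * c)); [apply cconst|].
        apply (cmul etc (fun _ => c)); [apply etc_cont|apply cconst]. }
  unfold Z, Jc, etc in EZ. rewrite g_0, !clamp_id, Heta0 in EZ by lra.
  unfold g in EZ. rewrite clamp_id in EZ by lra.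
  pose proof (J_pos a t0 Ha ltac:(lra)). fold c in H.
  assert (E3 : D 3 0 (gamma a t0) t0 = D 3 0 a 0 + q ^ 2 * (eta t0 / (1 - eta t0 * c))).
  { fold c in EZ. replace (q ^ 2 * (0 / (1 - 0 * c))) with 0 in EZ by (unfold Rdiv; ring). lra. }
  rewrite E3. unfold q. field. lra.
Qed.

Lemma final a : 0 <= a <= 1 ->
    let J := 1 - eta t0 * D 1%nat 0%nat a 0 in
    (exists ga,
       deriv_within (fun b => 0 <= b <= 1) (fun b => gamma b t0) a ga /\
       D 2%nat 0%nat (gamma a t0) t0 = D 2%nat 0%nat a 0 * ga /\
       D 2%nat 0%nat a 0 * ga = D 2%nat 0%nat a 0 / J * / Kbar t0) /\
    D 3%nat 0%nat (gamma a t0) t0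
      = D 3%nat 0%nat a 0 + eta t0 * (D 2%nat 0%nat a 0) ^ 2 / J /\
    (0 < D 2%nat 0%nat (gamma a t0) t0 <-> 0 < D 2%nat 0%nat a 0) /\
    (D 2%nat 0%nat (gamma a t0) t0 < 0 <-> D 2%nat 0%nat a 0 < 0).
Proof.
  intros Ha J.
  assert (Ht : 0 <= t0 <= t0) by lra.
  destruct (key a t0 Ha Ht) as [EP HKb].
  pose proof (J_pos a t0 Ha Ht) as HJ. fold J in HJ, EP.
  pose proof (uxx_P a t0 Ha Ht) as HU. unfold g in HU. rewrite clamp_id in HU by lra.
  pose proof (P_pos a t0) as HP.
  assert (E2 : D 2 0 (gamma a t0) t0 = D 2 0 a 0 * E a t0).
  { rewrite E_P, <- HU. field. lra. }
  assert (HE : 0 < E a t0) by (unfold E; apply exp_pos).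
  split; [|split; [|split]].
  - exists (E a t0). split; [apply dgamma; auto|]. split; auto.
    rewrite E_P, EP. field. split; lra.
  - apply uxxx_formula; auto.
  - rewrite E2. split; intros H.
    + destruct (Rle_dec (D 2 0 a 0) 0); [|lra]. nra.
    + nra.
  - rewrite E2. split; intros H.
    + destruct (Rle_dec 0 (D 2 0 a 0)); [|lra]. nra.
    + nra.
Qed.

End Main.

Theorem mainTheorem4
  (bc : BC) (T : R) (u : R -> R -> R) (D : nat -> nat -> R -> R -> R)
  (gamma : R -> R -> R) (eta Kbar : R -> R) :
  0 < T ->
  smooth_derivs T u D ->
  bc_holds bc T u ->
  (forall x t, 0 <= x <= 1 -> 0 <= t < T ->
     exists I, Rint (fun y => (D 1%nat 0%nat y t) ^ 2) 0 1 I /\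
       D 1%nat 1%nat x t + u x t * D 2%nat 0%nat x t - (D 1%nat 0%nat x t) ^ 2
         = -2 * I) ->
  (forall a, 0 <= a <= 1 -> gamma a 0 = a) ->
  (forall a t, 0 <= a <= 1 -> 0 <= t < T ->
     deriv_within (fun s => 0 <= s < T) (fun s => gamma a s) t
       (u (gamma a t) t)) ->
  (forall t, 0 <= t < T ->
     Rint (fun b => / (1 - eta t * D 1%nat 0%nat b 0)) 0 1 (Kbar t)) ->
  eta 0 = 0 ->
  (forall t, 0 <= t < T ->
     deriv_within (fun s => 0 <= s < T) eta t (/ (Kbar t) ^ 2)) ->
  forall t a, 0 <= t < T -> 0 <= a <= 1 ->
    let J := 1 - eta t * D 1%nat 0%nat a 0 in
    (exists ga,
       deriv_within (fun b => 0 <= b <= 1) (fun b => gamma b t) a ga /\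
       D 2%nat 0%nat (gamma a t) t = D 2%nat 0%nat a 0 * ga /\
       D 2%nat 0%nat a 0 * ga = D 2%nat 0%nat a 0 / J * / Kbar t) /\
    D 3%nat 0%nat (gamma a t) t
      = D 3%nat 0%nat a 0 + eta t * (D 2%nat 0%nat a 0) ^ 2 / J /\
    (0 < D 2%nat 0%nat (gamma a t) t <-> 0 < D 2%nat 0%nat a 0) /\
    (D 2%nat 0%nat (gamma a t) t < 0 <-> D 2%nat 0%nat a 0 < 0).
Proof.
  intros HT Hsm Hbc Hpde Hg0 Hgd HK Heta0 Hetad t a Ht Ha.
  destruct (bound_D bc T u D Hsm Hbc t Ht 1 0) as [M [HM0 HM]].
  apply (final bc T u D gamma eta Kbar HT Hsm Hbc Hpde Hg0 Hgd HK Heta0 Hetad t Ht M HM0 HM a Ha).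
Qed.
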